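(* Let $r>0$ and consider the delay system $\dot x(t)=\mathrm{A}x(t)+\mathrm{B}x(t-r)+\widehat f(x(t),x(t-r))$ in $\mathbb{R}^n$ satisfying the hypotheses described in the context, together with its perturbation $\dot x(t)=\mathrm{A}_\epsilon x(t)+\mathrm{B}_\epsilon x(t-r)+\widehat f(x(t),x(t-r))$, $\epsilon>0$, as described in the context. Let \[\mathrm{M}_\epsilon=-\mathrm{B}_\epsilon e^{-(2\lambda_\epsilon+\overline{\lambda}_\epsilon)r}-\mathrm{A}_\epsilon+(2\lambda_\epsilon+\overline{\lambda}_\epsilon)\mathrm{I},\] and let $R_{\epsilon1},R_{\epsilon2}\in\mathbb{C}^n$ be as in the context. Then for every (small enough) $\epsilon>0$, \[\Psi_{\epsilon1}(0)\mathrm{M}_\epsilon=\mu_\epsilon h_1(\epsilon),\qquad \Psi_{\epsilon1}(0)(\mathrm{B}_\epsilon R_{\epsilon1}-R_{\epsilon2})=\mu_\epsilon h_2(\epsilon),\] where $h_1$ (row-vector valued) and $h_2$ (scalar valued) have finite limits as $\epsilon\to0$.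
   Context: Unperturbed setting: $f(x,y)=\mathrm{A}x+\mathrm{B}y+\widehat f(x,y)$ is $C^k$, $k>3$, near $(0,0)$, $f(0,0)=0$, $\widehat f$ the nonlinear part; $\det(\lambda\mathrm{I}-\mathrm{A}-e^{-\lambda r}\mathrm{B})=0$ has simple roots $\pm\omega i$, $\omega>0$, all other roots having negative real part. Perturbation: $\mathrm{A}_\epsilon,\mathrm{B}_\epsilon$ real $n\times n$ matrices depending smoothly on $\epsilon>0$, $\mathrm{A}_\epsilon\to\mathrm{A}$, $\mathrm{B}_\epsilon\to\mathrm{B}$ as $\epsilon\searrow0$, such that for small $\epsilon$ the equation $\det(\lambda\mathrm{I}-\mathrm{A}_\epsilon-e^{-\lambda r}\mathrm{B}_\epsilon)=0$ has simple roots $\lambda_\epsilon=\mu_\epsilon+\omega_\epsilon i$, $\overline{\lambda}_\epsilon$, with $\mu_\epsilon>0$, all other roots having negative real part; then $\mu_\epsilon\to0$, $\omega_\epsilon\to\omega$. Objects: $\varphi_{\epsilon1}(s)=\varphi_{\epsilon1}(0)e^{\lambda_\epsilon s}$, $\varphi_{\epsilon2}=\overline{\varphi_{\epsilon1}}$, $s\in[-r,0]$, with $(\lambda_\epsilon\mathrm{I}-\mathrm{A}_\epsilon-\mathrm{B}_\epsilon e^{-\lambda_\epsilon r})\varphi_{\epsilon1}(0)=0$; row vector $\psi_{\epsilon1}(0)\ne0$ with $\psi_{\epsilon1}(0)(-\lambda_\epsilon\mathrm{I}+\mathrm{A}_\epsilon+\mathrm{B}_\epsilon e^{-\lambda_\epsilon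 r})=0$; $\Psi_{\epsilon1}(0)=[\psi_{\epsilon1}(0)\varphi_{\epsilon1}(0)+\psi_{\epsilon1}(0)\mathrm{B}_\epsilon\varphi_{\epsilon1}(0)e^{-\lambda_\epsilon r}r]^{-1}\psi_{\epsilon1}(0)$, $\Psi_{\epsilon1}(\zeta)=\Psi_{\epsilon1}(0)e^{-\lambda_\epsilon\zeta}$, $\zeta\in[0,r]$; bilinear form $\langle\psi,\varphi\rangle_\epsilon=\psi(0)\varphi(0)+\int_{-r}^0\psi(\zeta+r)\mathrm{B}_\epsilon\varphi(\zeta)d\zeta$ (so $\langle\Psi_{\epsilon1},\varphi_{\epsilon1}\rangle_\epsilon=1$, $\langle\Psi_{\epsilon1},\varphi_{\epsilon2}\rangle_\epsilon=0$). The perturbed problem has an unstable manifold, graph of $w_\epsilon(v,\overline v)=\sum_{j+k\ge2}\frac{1}{j!k!}w_{\epsilon j,k}v^j\overline v^k$, $w_{\epsilon j,k}\in C([-r,0],\mathbb{C}^n)$ with $\langle\Psi_{\epsilon1},w_{\epsilon j,k}\rangle_\epsilon=0$. With $\Phi_\epsilon=v\varphi_{\epsilon1}+\overline v\varphi_{\epsilon2}+w_\epsilon(v,\overline v)$, $\widehat f(\Phi_\epsilon(0),\Phi_\epsilon(-r))=\sum\frac{1}{j!k!}f_{\epsilon j,k}v^j\overline v^k$ and $g_{\epsilon j,k}=\Psi_{\epsilon1}(0)f_{\epsilon j,k}$. The corresponding unperturbed objects ($\varphi_1,\Psi_1,w_{j,k},f_{j,k},g_{j,k}$, defined identically with $\epsilon=0$,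 $\lambda_0=\omega i$, and the center manifold) are the limits of the perturbed ones as $\epsilon\to0$. Define $R_{\epsilon1}=-\frac{g_{\epsilon2,1}}{\lambda_\epsilon+\overline\lambda_\epsilon}\varphi_{\epsilon1}(0)(e^{-\lambda_\epsilon r}-e^{-(2\lambda_\epsilon+\overline\lambda_\epsilon)r})-\frac{\overline g_{\epsilon1,2}}{2\lambda_\epsilon}\overline{\varphi_{\epsilon1}(0)}(e^{-\overline\lambda_\epsilon r}-e^{-(2\lambda_\epsilon+\overline\lambda_\epsilon)r})-e^{-(2\lambda_\epsilon+\overline\lambda_\epsilon)r}\int_{-r}^0\big[2g_{\epsilon1,1}w_{\epsilon2,0}(\theta)+(g_{\epsilon2,0}+2\overline g_{\epsilon1,1})w_{\epsilon1,1}(\theta)+\overline g_{\epsilon0,2}w_{\epsilon0,2}(\theta)\big]e^{-(2\lambda_\epsilon+\overline\lambda_\epsilon)\theta}d\theta$, $R_{\epsilon2}=g_{\epsilon2,1}\varphi_{\epsilon1}(0)+\overline g_{\epsilon1,2}\overline{\varphi_{\epsilon1}(0)}-f_{\epsilon2,1}+2g_{\epsilon1,1}w_{\epsilon2,0}(0)+(g_{\epsilon2,0}+2\overline g_{\epsilon1,1})w_{\epsilon1,1}(0)+\overline g_{\epsilon0,2}w_{\epsilon0,2}(0)$. Then $w_{\epsilon2,1}(0)$ is the solution of $\mathrm{M}_\epsilon X=\mathrm{B}_\epsilon R_{\epsilon1}-R_{\epsilon2}$. *)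

(* Defs.v *)
From Stdlib Require Import Reals.
From Coquelicot Require Import Coquelicot.
Open Scope R_scope.

(* Vectors of C^n are represented as nat -> C (only indices < n matter),
   complex n x n matrices as nat -> nat -> C, real ones as nat -> nat -> R. *)
Definition cvec := nat -> C.
Definition cmat := nat -> nat -> C.
Definition rmat := nat -> nat -> R.

Fixpoint csum (n : nat) (f : nat -> C) : C :=
  match n with
  | O => RtoC 0
  | S m => Cplus (csum m f) (f m)
  end.

Definition mv (n : nat) (M : cmat) (v : cvec) : cvec :=
  fun i => csum n (fun j => Cmult (M i j) (v j)).
Definition vm (n : nat) (u : cvec) (M : cmat) : cvec :=
  fun j => csum n (fun i => Cmult (u i) (M i j)).
Definition dot (n : nat) (u v : cvec) : C := csum n (fun i => Cmult (u i) (v i)).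

Definition rtoc_mat (A : rmat) : cmat := fun i j => RtoC (A i j).
Definition idm : cmat := fun i j => if Nat.eqb i j then RtoC 1 else RtoC 0.

Definition vadd (u v : cvec) : cvec := fun i => Cplus (u i) (v i).
Definition vsub (u v : cvec) : cvec := fun i => Cminus (u i) (v i).
Definition vscal (a : C) (u : cvec) : cvec := fun i => Cmult a (u i).

Definition cexp (z : C) : C :=
  (exp (Re z) * cos (Im z), exp (Re z) * sin (Im z)).

Definition minor0 (i : nat) (M : cmat) : cmat :=
  fun a b => M (if Nat.ltb a i then a else S a) (S b).
Fixpoint det (n : nat) (M : cmat) : C :=
  match n with
  | O => RtoC 1
  | S m => csum n (fun i => Cmult (Cmult (RtoC ((-1) ^ i)) (M i O)) (det m (minor0 i M)))
  end.

Definition charmat (A B : rmat) (r : R) (z : C) : cmat :=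
  fun i j => Cminus (Cminus (Cmult z (idm i j)) (RtoC (A i j)))
                    (Cmult (cexp (Cmult (RtoC (- r)) z)) (RtoC (B i j))).
Definition chardet (n : nat) (A B : rmat) (r : R) (z : C) : C :=
  det n (charmat A B r z).

Definition simple_root (n : nat) (A B : rmat) (r : R) (z : C) : Prop :=
  chardet n A B r z = RtoC 0 /\
  exists d : C, is_derive (chardet n A B r) z d /\ d <> RtoC 0.

Definition nonzero_vec (n : nat) (v : cvec) : Prop := exists i, (i < n)%nat /\ v i <> RtoC 0.

Definition cint (f : R -> C) (a b : R) : C :=
  (RInt (fun t => Re (f t)) a b, RInt (fun t => Im (f t)) a b).
Definition vint (f : R -> cvec) (a b : R) : cvec := fun i => cint (fun t => f t i) a b.

Definition Psi0 (n : nat) (B : rmat) (r : R) (lam : C) (psi phi : cvec) : cvec :=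
  vscal (Cinv (Cplus (dot n psi phi)
                (Cmult (Cmult (dot n psi (mv n (rtoc_mat B) phi))
                              (cexp (Cmult (RtoC (- r)) lam))) (RtoC r)))) psi.

Definition Psifun (lam : C) (P0 : cvec) : R -> cvec :=
  fun zeta => vscal (cexp (Cmult (RtoC (- zeta)) lam)) P0.

Definition bilin (n : nat) (B : rmat) (r : R) (psi : R -> cvec) (phi : R -> cvec) : C :=
  Cplus (dot n (psi 0) (phi 0))
        (cint (fun zeta => dot n (psi (zeta + r)) (mv n (rtoc_mat B) (phi zeta))) (- r) 0).

Definition Mmat (A B : rmat) (r : R) (lam : C) : cmat :=
  let s := Cplus (Cmult (RtoC 2) lam) (Cconj lam) in
  fun i j => Cplus (Cminus (Copp (Cmult (RtoC (B i j)) (cexp (Cmult (RtoC (- r)) s))))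
                           (RtoC (A i j)))
                   (Cmult s (idm i j)).

Definition R1vec (r : R) (lam : C) (phi0 : cvec)
  (g20 g11 g02 g21 g12 : C) (w20 w11 w02 : R -> cvec) : cvec :=
  let s := Cplus (Cmult (RtoC 2) lam) (Cconj lam) in
  let es := cexp (Cmult (RtoC (- r)) s) in
  let integrand : R -> cvec := fun th =>
    vscal (cexp (Cmult (RtoC (- th)) s))
      (vadd (vadd (vscal (Cmult (RtoC 2) g11) (w20 th))
                  (vscal (Cplus g20 (Cmult (RtoC 2) (Cconj g11))) (w11 th)))
            (vscal (Cconj g02) (w02 th))) in
  vsub (vsub (vscal (Copp (Cdiv g21 (Cplus lam (Cconj lam))))
                    (vscal (Cminus (cexp (Cmult (RtoC (- r)) lam)) es) phi0))
             (vscal (Cdiv (Cconj g12) (Cmult (RtoC 2) lam))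
                    (vscal (Cminus (cexp (Cmult (RtoC (- r)) (Cconj lam))) es)
                           (fun i => Cconj (phi0 i)))))
       (vscal es (vint integrand (- r) 0)).

Definition R2vec (phi0 : cvec) (g20 g11 g02 g21 g12 : C) (f21 : cvec)
  (w20 w11 w02 : R -> cvec) : cvec :=
  vadd (vadd (vadd (vsub (vadd (vscal g21 phi0) (vscal (Cconj g12) (fun i => Cconj (phi0 i))))
                         f21)
                   (vscal (Cmult (RtoC 2) g11) (w20 0)))
             (vscal (Cplus g20 (Cmult (RtoC 2) (Cconj g11))) (w11 0)))
       (vscal (Cconj g02) (w02 0)).

Definition cont_on (n : nat) (r : R) (w : R -> cvec) : Prop :=
  forall i th, (i < n)%nat -> -r <= th <= 0 ->
    filterlim (fun t => w t i) (within (fun t => -r <= t <= 0) (locally th)) (locally (w th i)).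

Definition unif_cv (n : nat) (r : R) (w : R -> R -> cvec) (w0 : R -> cvec) : Prop :=
  forall eta, 0 < eta -> exists delta, 0 < delta /\
    forall e th i, 0 < e < delta -> -r <= th <= 0 -> (i < n)%nat ->
      Cmod (Cminus (w e th i) (w0 th i)) < eta.

Definition cv0 {T : UniformSpace} (u : R -> T) (l : T) : Prop :=
  filterlim u (at_right 0) (locally l).

(* Main.v *)
Require Import Defs.
From Stdlib Require Import Reals Lra Lia.
From Coquelicot Require Import Coquelicot.
Open Scope R_scope.

Definition cvR (u : R -> R) (l : R) := filterlim u (at_right 0) (locally l).

Section Gen.
Context {T : Type} {F : (T -> Prop) -> Prop} {FF : Filter F}.
Lemma fR_plus (u v : T -> R) a b : filterlim u F (locally a) -> filterlim v F (locally b) -> filterlim (fun e => u e + v e) F (locally (a + b)).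
Proof. intros Hu Hv. exact (filterlim_comp_2 u v plus Hu Hv (filterlim_plus a b)). Qed.
Lemma fR_mult (u v : T -> R) a b : filterlim u F (locally a) -> filterlim v F (locally b) -> filterlim (fun e => u e * v e) F (locally (a * b)).
Proof. intros Hu Hv. exact (filterlim_comp_2 u v (@mult R_AbsRing) Hu Hv (filterlim_mult (K:=R_AbsRing) a b)). Qed.
Lemma fR_opp (u : T -> R) a : filterlim u F (locally a) -> filterlim (fun e => - u e) F (locally (- a)).
Proof. intros Hu. eapply filterlim_comp; [exact Hu|exact (filterlim_opp (V:=R_NormedModule) a)]. Qed.
Lemma fR_const (c : R) : filterlim (fun _ : T => c) F (locally c).
Proof. apply filterlim_const. Qed.
Lemma fR_minus (u v : T -> R) a b : filterlim u F (locally a) -> filterlim v F (locally b) -> filterlim (fun e => u e - v e) F (locally (a - b)).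
Proof. intros; apply fR_plus; auto. apply fR_opp; auto. Qed.
Lemma fR_cont f (u : T -> R) l : continuity_pt f l -> filterlim u F (locally l) -> filterlim (fun e => f (u e)) F (locally (f l)).
Proof. intros Hf Hu. apply continuity_pt_filterlim in Hf. eapply filterlim_comp; [exact Hu|exact Hf]. Qed.
Lemma fR_inv (u : T -> R) l : l <> 0 -> filterlim u F (locally l) -> filterlim (fun e => / u e) F (locally (/ l)).
Proof. intros Hl Hu. apply fR_cont; auto. apply continuity_pt_inv; auto. apply derivable_continuous_pt, derivable_pt_id. Qed.
Lemma fC_split (f : T -> C) (L : C) :
  filterlim f F (locally L) <-> (filterlim (fun e => fst (f e)) F (locally (fst L)) /\ filterlim (fun e => snd (f e)) F (locally (snd L))).
Proof.
  rewrite !filterlim_locally. split.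
  - intros H; split; intros eps; generalize (H eps); apply filter_imp; intros x [H1 H2]; auto.
  - intros [H1 H2] eps. generalize (filter_and _ _ (H1 eps) (H2 eps)).
    apply filter_imp. intros x [A B]; split; auto.
Qed.
Lemma fC_plus (f g : T -> C) a b : filterlim f F (locally a) -> filterlim g F (locally b) -> filterlim (fun e => Cplus (f e) (g e)) F (locally (Cplus a b)).
Proof. rewrite !fC_split. intros [A1 A2] [B1 B2]; split; simpl; apply fR_plus; auto. Qed.
Lemma fC_opp (f : T -> C) a : filterlim f F (locally a) -> filterlim (fun e => Copp (f e)) F (locally (Copp a)).
Proof. rewrite !fC_split. intros [A1 A2]; split; simpl; apply fR_opp; auto. Qed.
Lemma fC_minus (f g : T -> C) a b : filterlim f F (locally a) -> filterlim g F (locally b) -> filterlim (fun e => Cminus (f e) (g e)) F (locally (Cminus a b)).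
Proof. intros; unfold Cminus; apply fC_plus; auto; apply fC_opp; auto. Qed.
Lemma fC_mult (f g : T -> C) a b : filterlim f F (locally a) -> filterlim g F (locally b) -> filterlim (fun e => Cmult (f e) (g e)) F (locally (Cmult a b)).
Proof. rewrite !fC_split. intros [A1 A2] [B1 B2]; split; simpl.
  apply fR_minus; apply fR_mult; auto. apply fR_plus; apply fR_mult; auto. Qed.
Lemma fC_const (c : C) : filterlim (fun _ : T => c) F (locally c).
Proof. apply filterlim_const. Qed.
Lemma fC_RtoC (u : T -> R) l : filterlim u F (locally l) -> filterlim (fun e => RtoC (u e)) F (locally (RtoC l)).
Proof. rewrite fC_split; intros; split; simpl; auto. apply fR_const. Qed.
Lemma fC_conj (f : T -> C) a : filterlim f F (locally a) -> filterlim (fun e => Cconj (f e)) F (locally (Cconj a)).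
Proof. rewrite !fC_split. intros [A1 A2]; split; simpl; auto. apply fR_opp; auto. Qed.
Lemma fR_pow2 (u : T -> R) b : filterlim u F (locally b) -> filterlim (fun e => u e ^ 2) F (locally (b ^ 2)).
Proof. intros Hu. replace (b ^ 2) with (b * b) by ring.
  eapply filterlim_ext; [|apply (fR_mult u u b b Hu Hu)]. intros; simpl; ring. Qed.
Lemma fC_inv (f : T -> C) a : a <> RtoC 0 -> filterlim f F (locally a) -> filterlim (fun e => Cinv (f e)) F (locally (Cinv a)).
Proof.
  intros Ha. rewrite !fC_split. intros [A1 A2].
  assert (Hn : fst a ^ 2 + snd a ^ 2 <> 0).
  { destruct a as [x y]; simpl. intro H. apply Ha.
    assert (x = 0) by nra. assert (y = 0) by nra. subst. reflexivity. }
  assert (Hd : filterlim (fun e => fst (f e) ^ 2 + snd (f e) ^ 2) F (locally (fst a ^ 2 + snd a ^ 2))).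
  { apply fR_plus; apply fR_pow2; auto. }
  split; cbn [Cinv fst snd]; unfold Rdiv.
  - apply fR_mult; auto. apply fR_inv; auto.
  - apply fR_mult. apply fR_opp; auto. apply fR_inv; auto.
Qed.
Lemma fC_div (f g : T -> C) a b : b <> RtoC 0 -> filterlim f F (locally a) -> filterlim g F (locally b) -> filterlim (fun e => Cdiv (f e) (g e)) F (locally (Cdiv a b)).
Proof. intros; unfold Cdiv; apply fC_mult; auto; apply fC_inv; auto. Qed.
Lemma cont_exp x : continuity_pt exp x.
Proof. apply derivable_continuous_pt, derivable_pt_exp. Qed.
Lemma fC_cexp (f : T -> C) a : filterlim f F (locally a) -> filterlim (fun e => cexp (f e)) F (locally (cexp a)).
Proof.
  rewrite !fC_split. intros [A1 A2]; split; simpl; apply fR_mult;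
  try (apply fR_cont; [apply cont_exp|auto]).
  apply fR_cont; auto. apply continuity_cos.
  apply fR_cont; auto. apply continuity_sin.
Qed.
End Gen.

Lemma cvC_split (f : R -> C) (L : C) :
  cv0 f L <-> (cvR (fun e => fst (f e)) (fst L) /\ cvR (fun e => snd (f e)) (snd L)).
Proof. apply fC_split. Qed.
Lemma cvC_plus (f g : R -> C) a b : cv0 f a -> cv0 g b -> cv0 (fun e => Cplus (f e) (g e)) (Cplus a b).
Proof. apply fC_plus. Qed.
Lemma cvC_minus (f g : R -> C) a b : cv0 f a -> cv0 g b -> cv0 (fun e => Cminus (f e) (g e)) (Cminus a b).
Proof. apply fC_minus. Qed.
Lemma cvC_opp (f : R -> C) a : cv0 f a -> cv0 (fun e => Copp (f e)) (Copp a).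
Proof. apply fC_opp. Qed.
Lemma cvC_mult (f g : R -> C) a b : cv0 f a -> cv0 g b -> cv0 (fun e => Cmult (f e) (g e)) (Cmult a b).
Proof. apply fC_mult. Qed.
Lemma cvC_const (c : C) : cv0 (fun _ : R => c) c.
Proof. apply fC_const. Qed.
Lemma cvC_RtoC (u : R -> R) l : cvR u l -> cv0 (fun e => RtoC (u e)) (RtoC l).
Proof. apply fC_RtoC. Qed.
Lemma cvC_conj (f : R -> C) a : cv0 f a -> cv0 (fun e => Cconj (f e)) (Cconj a).
Proof. apply fC_conj. Qed.
Lemma cvC_inv (f : R -> C) a : a <> RtoC 0 -> cv0 f a -> cv0 (fun e => Cinv (f e)) (Cinv a).
Proof. apply fC_inv. Qed.
Lemma cvC_div (f g : R -> C) a b : b <> RtoC 0 -> cv0 f a -> cv0 g b -> cv0 (fun e => Cdiv (f e) (g e)) (Cdiv a b).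
Proof. apply fC_div. Qed.
Lemma cvC_cexp (f : R -> C) a : cv0 f a -> cv0 (fun e => cexp (f e)) (cexp a).
Proof. apply fC_cexp. Qed.
Lemma cvR_plus (u v : R -> R) a b : cvR u a -> cvR v b -> cvR (fun e => u e + v e) (a + b).
Proof. apply fR_plus. Qed.
Lemma cvR_minus (u v : R -> R) a b : cvR u a -> cvR v b -> cvR (fun e => u e - v e) (a - b).
Proof. apply fR_minus. Qed.
Lemma cvR_mult (u v : R -> R) a b : cvR u a -> cvR v b -> cvR (fun e => u e * v e) (a * b).
Proof. apply fR_mult. Qed.
Lemma cvR_opp (u : R -> R) a : cvR u a -> cvR (fun e => - u e) (- a).
Proof. apply fR_opp. Qed.
Lemma cvR_const (c : R) : cvR (fun _ => c) c.
Proof. apply fR_const. Qed.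
Lemma cvR_inv (u : R -> R) l : l <> 0 -> cvR u l -> cvR (fun e => / u e) (/ l).
Proof. apply fR_inv. Qed.
Lemma cvR_cont f (u : R -> R) l : continuity_pt f l -> cvR u l -> cvR (fun e => f (u e)) (f l).
Proof. apply fR_cont. Qed.
Lemma cvR_ext u v l : (exists d, 0 < d /\ forall e, 0 < e < d -> u e = v e) -> cvR u l -> cvR v l.
Proof.
  intros [d [Hd H]] Hu. eapply filterlim_ext_loc; [|exact Hu].
  exists (mkposreal d Hd). intros y Hy Hy0. apply H. split; auto.
  unfold ball in Hy; simpl in Hy; unfold AbsRing_ball, abs, minus, plus, opp in Hy; simpl in Hy.
  rewrite Rabs_right in Hy; lra.
Qed.

Lemma cvC_ext (f g : R -> C) (l : C) : (exists d, 0 < d /\ forall e, 0 < e < d -> f e = g e) -> cv0 f l -> cv0 g l.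
Proof.
  intros H. rewrite !cvC_split. intros [A1 A2]; split; eapply cvR_ext; eauto;
  destruct H as [d [Hd H]]; exists d; split; auto; intros; rewrite H; auto.
Qed.

Lemma cvR_eps u l : (forall eps, 0 < eps -> exists d, 0 < d /\ forall e, 0 < e < d -> Rabs (u e - l) < eps) -> cvR u l.
Proof.
  intros H. unfold cvR. apply filterlim_locally. intros eps.
  destruct (H eps (cond_pos eps)) as [d [Hd Hd']].
  exists (mkposreal d Hd). intros y Hy Hy0. apply Hd'. split; auto.
  unfold ball in Hy; simpl in Hy; unfold AbsRing_ball, abs, minus, plus, opp in Hy; simpl in Hy.
  rewrite Rabs_right in Hy; lra.
Qed.
Lemma cvR_get u l : cvR u l -> forall eps, 0 < eps -> exists d, 0 < d /\ forall e, 0 < e < d -> Rabs (u e - l) < eps.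
Proof.
  intros H eps Heps. unfold cvR in H. rewrite filterlim_locally in H.
  destruct (H (mkposreal eps Heps)) as [d Hd]. exists d; split; [apply cond_pos|].
  intros e He. assert (B: ball 0 d e).
  { unfold ball; simpl; unfold AbsRing_ball, abs, minus, plus, opp; simpl. rewrite Rabs_right; lra. }
  specialize (Hd e B ltac:(lra)). unfold ball in Hd; simpl in Hd; unfold AbsRing_ball, abs, minus, plus, opp in Hd; simpl in Hd. exact Hd.
Qed.
Lemma Cmod_le_comp (z : C) : Cmod z <= Rabs (fst z) + Rabs (snd z).
Proof.
  destruct z as [x y]; unfold Cmod; simpl. apply Rsqr_incr_0_var.
  - rewrite Rsqr_sqrt by nra. unfold Rsqr. rewrite !Rmult_1_r.
    assert (Rabs x * Rabs x = x * x) by (rewrite <- Rabs_mult; apply Rabs_right; nra).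
    assert (Rabs y * Rabs y = y * y) by (rewrite <- Rabs_mult; apply Rabs_right; nra).
    assert (0 <= Rabs x * Rabs y) by (apply Rmult_le_pos; apply Rabs_pos). nra.
  - assert (0 <= Rabs x) by apply Rabs_pos. assert (0 <= Rabs y) by apply Rabs_pos. lra.
Qed.
Lemma abs_fst_le (z : C) : Rabs (fst z) <= Cmod z.
Proof. apply re_le_Cmod. Qed.
Lemma abs_snd_le (z : C) : Rabs (snd z) <= Cmod z.
Proof. destruct z as [x y]. unfold Cmod; simpl. rewrite <- sqrt_Rsqr_abs. apply sqrt_le_1_alt. unfold Rsqr; nra. Qed.
Lemma cvC_get (f : R -> C) l : cv0 f l -> forall eps, 0 < eps -> exists d, 0 < d /\ forall e, 0 < e < d -> Cmod (Cminus (f e) l) < eps.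
Proof.
  rewrite cvC_split. intros [A1 A2] eps Heps.
  destruct (cvR_get _ _ A1 (eps/2)) as [d1 [Hd1 H1]]; [lra|].
  destruct (cvR_get _ _ A2 (eps/2)) as [d2 [Hd2 H2]]; [lra|].
  exists (Rmin d1 d2); split; [apply Rmin_pos; auto|]. intros e He.
  eapply Rle_lt_trans; [apply Cmod_le_comp|]. simpl.
  assert (e < d1) by (eapply Rlt_le_trans; [apply He|apply Rmin_l]).
  assert (e < d2) by (eapply Rlt_le_trans; [apply He|apply Rmin_r]).
  specialize (H1 e ltac:(lra)). specialize (H2 e ltac:(lra)). unfold Rminus in H1, H2. lra.
Qed.
Lemma cvC_eps (f : R -> C) l : (forall eps, 0 < eps -> exists d, 0 < d /\ forall e, 0 < e < d -> Cmod (Cminus (f e) l) < eps) -> cv0 f l.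
Proof.
  intros H. rewrite cvC_split; split; apply cvR_eps; intros eps Heps;
  destruct (H eps Heps) as [d [Hd H']]; exists d; split; auto; intros e He;
  specialize (H' e He).
  generalize (abs_fst_le (Cminus (f e) l)); simpl; unfold Rminus; lra.
  generalize (abs_snd_le (Cminus (f e) l)); simpl; unfold Rminus; lra.
Qed.

Lemma expL1 y : 0 <= exp (-y) - 1 + y.
Proof. generalize (exp_ineq1_le (-y)); lra. Qed.
Lemma expL2 y : 0 <= y -> exp (-y) - 1 + y <= y ^ 2 / 2.
Proof.
  intros Hy. destruct (Req_dec y 0) as [->|Hy0]. { rewrite Ropp_0, exp_0. lra. }
  set (h := fun t => exp (-t) - 1 + t - t ^ 2 / 2).
  destruct (MVT_gen h 0 y (fun t => - exp (- t) + 1 - t)) as [c [Hc Hm]].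
  - intros x _. unfold h. auto_derive; auto. field.
  - intros x _. apply derivable_continuous_pt. unfold h. 
    apply ex_derive_Reals_0. auto_derive; auto.
  - rewrite Rmin_left, Rmax_right in Hc by lra. unfold h in Hm.
    rewrite Ropp_0, exp_0 in Hm. generalize (expL1 c). nra.
Qed.
Lemma expL3 y : 0 <= y -> y ^ 2 / 2 - y ^ 3 / 6 <= exp (-y) - 1 + y.
Proof.
  intros Hy. destruct (Req_dec y 0) as [->|Hy0]. { rewrite Ropp_0, exp_0. lra. }
  set (h := fun t => exp (-t) - 1 + t - t ^ 2 / 2 + t ^ 3 / 6).
  destruct (MVT_gen h 0 y (fun t => - exp (- t) + 1 - t + t ^ 2 / 2)) as [c [Hc Hm]].
  - intros x _. unfold h. auto_derive; auto. field.
  - intros x _. apply derivable_continuous_pt. unfold h. 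
    apply ex_derive_Reals_0. auto_derive; auto.
  - rewrite Rmin_left, Rmax_right in Hc by lra. unfold h in Hm.
    rewrite Ropp_0, exp_0 in Hm. generalize (expL2 c ltac:(lra)). nra.
Qed.
Lemma ratio1 y : 0 < y -> Rabs ((1 - exp (-y)) / y - 1) <= y / 2.
Proof.
  intros Hy. generalize (expL1 y) (expL2 y ltac:(lra)); intros A B.
  replace ((1 - exp (-y)) / y - 1) with (- ((exp (-y) - 1 + y) / y)) by (field; lra).
  rewrite Rabs_Ropp, Rabs_right.
  - apply Rmult_le_reg_r with y; auto. unfold Rdiv. rewrite Rmult_assoc, Rinv_l by lra. nra.
  - apply Rle_ge, Rmult_le_pos; auto. apply Rlt_le, Rinv_0_lt_compat; auto.
Qed.
Lemma ratio2 y : 0 < y -> Rabs ((exp (-y) - 1 + y) / y ^ 2 - 1 / 2) <= y / 6.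
Proof.
  intros Hy. generalize (expL3 y ltac:(lra)) (expL2 y ltac:(lra)); intros A B.
  assert (Hy2 : 0 < y ^ 2) by (apply pow_lt; auto).
  apply Rabs_le. split.
  - apply Rmult_le_reg_r with (y ^ 2); auto.
    replace (((exp (- y) - 1 + y) / y ^ 2 - 1 / 2) * y ^ 2) with (exp (-y) - 1 + y - y^2/2) by (field; lra).
    nra.
  - apply Rmult_le_reg_r with (y ^ 2); auto.
    replace (((exp (- y) - 1 + y) / y ^ 2 - 1 / 2) * y ^ 2) with (exp (-y) - 1 + y - y^2/2) by (field; lra).
    nra.
Qed.

Lemma csum_ext n f g : (forall i, (i < n)%nat -> f i = g i) -> csum n f = csum n g.
Proof. induction n; simpl; intros H; auto. rewrite IHn by (intros; apply H; lia). rewrite H by lia. auto. Qed.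
Lemma csum_plus n f g : csum n (fun i => Cplus (f i) (g i)) = Cplus (csum n f) (csum n g).
Proof. induction n; simpl. apply injective_projections; simpl; ring. rewrite IHn. ring. Qed.
Lemma csum_scal n c f : csum n (fun i => Cmult c (f i)) = Cmult c (csum n f).
Proof. induction n; simpl. apply injective_projections; simpl; ring. rewrite IHn. ring. Qed.
Lemma csum_opp n f : csum n (fun i => Copp (f i)) = Copp (csum n f).
Proof. induction n; simpl. apply injective_projections; simpl; ring. rewrite IHn. ring. Qed.
Lemma csum_minus n f g : csum n (fun i => Cminus (f i) (g i)) = Cminus (csum n f) (csum n g).
Proof. unfold Cminus. rewrite csum_plus, csum_opp. auto. Qed.
Lemma csum_zero n : csum n (fun _ => RtoC 0) = RtoC 0.
Proof. induction n; simpl; auto. rewrite IHn. ring. Qed.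
Lemma csum_swap n m (F : nat -> nat -> C) :
  csum n (fun i => csum m (fun j => F i j)) = csum m (fun j => csum n (fun i => F i j)).
Proof.
  induction n; simpl. { rewrite csum_zero. auto. }
  rewrite IHn, <- csum_plus. auto.
Qed.
Lemma csum_delta_r n (u : cvec) j : (j < n)%nat -> csum n (fun i => Cmult (u i) (idm i j)) = u j.
Proof.
  induction n; intros Hj; [lia|]. simpl. destruct (Nat.eq_dec j n) as [->|Hne].
  - unfold idm at 2. rewrite Nat.eqb_refl. rewrite (csum_ext n _ (fun _ => RtoC 0)). rewrite csum_zero. ring.
    intros i Hi. unfold idm. destruct (Nat.eqb_spec i n); [lia|]. ring.
  - rewrite IHn by lia. unfold idm. destruct (Nat.eqb_spec n j); [lia|]. ring.
Qed.
Lemma csum_delta_l n (v : cvec) i : (i < n)%nat -> csum n (fun j => Cmult (idm i j) (v j)) = v i.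
Proof.
  intros Hi. rewrite <- (csum_delta_r n v i Hi). apply csum_ext. intros j Hj.
  unfold idm. rewrite Nat.eqb_sym. ring.
Qed.
Lemma Cconj_plus a b : Cconj (Cplus a b) = Cplus (Cconj a) (Cconj b).
Proof. apply injective_projections; simpl; ring. Qed.
Lemma Cconj_mult a b : Cconj (Cmult a b) = Cmult (Cconj a) (Cconj b).
Proof. apply injective_projections; simpl; ring. Qed.
Lemma Cconj_RtoC x : Cconj (RtoC x) = RtoC x.
Proof. apply injective_projections; simpl; ring. Qed.
Lemma csum_conj n f : Cconj (csum n f) = csum n (fun i => Cconj (f i)).
Proof. induction n; simpl. apply injective_projections; simpl; ring. rewrite Cconj_plus, IHn. auto. Qed.
Lemma cv_csum n (F : R -> nat -> C) (L : nat -> C) :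
  (forall i, (i < n)%nat -> cv0 (fun e => F e i) (L i)) -> cv0 (fun e => csum n (F e)) (csum n L).
Proof.
  induction n; intros H; simpl. apply cvC_const.
  apply cvC_plus. apply IHn; intros; apply H; lia. apply H; lia.
Qed.

Lemma cexp_add a b : cexp (Cplus a b) = Cmult (cexp a) (cexp b).
Proof.
  destruct a as [x y], b as [u v]. unfold cexp; simpl.
  rewrite exp_plus, cos_plus, sin_plus. apply injective_projections; simpl; ring.
Qed.
Lemma cexp_real x : cexp (RtoC x) = RtoC (exp x).
Proof. unfold cexp; simpl. rewrite cos_0, sin_0. apply injective_projections; simpl; ring. Qed.
Lemma cexp_conj z : cexp (Cconj z) = Cconj (cexp z).
Proof. destruct z as [x y]; unfold cexp; simpl. rewrite cos_neg, sin_neg. apply injective_projections; simpl; ring. Qed.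
Lemma cexp_0 : cexp (RtoC 0) = RtoC 1.
Proof. rewrite cexp_real, exp_0. auto. Qed.
Lemma Cmod_cexp z : Cmod (cexp z) = exp (fst z).
Proof.
  destruct z as [x y]; unfold cexp, Cmod; simpl.
  replace ((exp x * cos y) * ((exp x * cos y) * 1) + (exp x * sin y) * ((exp x * sin y) * 1)) with (exp x * exp x * (Rsqr (sin y) + Rsqr (cos y))) by (unfold Rsqr; ring).
  rewrite sin2_cos2. rewrite Rmult_1_r. apply sqrt_square. apply Rlt_le, exp_pos.
Qed.

Definition DD (r : R) := fun t : R => -r <= t <= 0.
Definition GC (r : R) (f : R -> C) : Prop :=
  forall th, -r <= th <= 0 -> filterlim f (within (DD r) (locally th)) (locally (f th)).

Lemma ballR x e y : ball x e y <-> Rabs (y - x) < e.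
Proof. unfold ball; simpl; unfold AbsRing_ball, abs, minus, plus, opp; simpl. tauto. Qed.

Definition clamp (r t : R) := Rmax (-r) (Rmin 0 t).
Lemma clamp_D r t : 0 <= r -> DD r (clamp r t).
Proof. unfold DD, clamp, Rmax, Rmin. repeat destruct Rle_dec; lra. Qed.
Lemma clamp_id r t : -r <= t <= 0 -> clamp r t = t.
Proof. unfold clamp, Rmax, Rmin. repeat destruct Rle_dec; lra. Qed.
Lemma clamp_lip r x t : 0 <= r -> Rabs (clamp r x - clamp r t) <= Rabs (x - t).
Proof. intros. unfold clamp, Rmax, Rmin. repeat destruct Rle_dec; split_Rabs; lra. Qed.
Lemma clamp_lim r t : 0 <= r -> filterlim (clamp r) (locally t) (within (DD r) (locally (clamp r t))).
Proof.
  intros Hr P [eps He]. exists eps. intros y Hy. apply He.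
  - apply ballR. apply ballR in Hy. eapply Rle_lt_trans; [apply clamp_lip; auto|]. auto.
  - apply clamp_D; auto.
Qed.
Lemma GC_real_cont r (g : R -> R) : 0 <= r ->
  (forall th, -r <= th <= 0 -> filterlim g (within (DD r) (locally th)) (locally (g th))) ->
  forall t, continuity_pt (fun x => g (clamp r x)) t.
Proof.
  intros Hr H t. apply continuity_pt_filterlim.
  eapply filterlim_comp; [apply clamp_lim; auto|]. apply H. apply clamp_D; auto.
Qed.
Lemma GC_real_ex r (g : R -> R) : 0 <= r ->
  (forall th, -r <= th <= 0 -> filterlim g (within (DD r) (locally th)) (locally (g th))) ->
  ex_RInt g (-r) 0.
Proof.
  intros Hr H. apply (ex_RInt_ext (fun x => g (clamp r x))).
  - intros x Hx. rewrite Rmin_left in Hx by lra. rewrite Rmax_right in Hx by lra.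
    rewrite clamp_id; auto; lra.
  - apply (ex_RInt_continuous (V:=R_CompleteNormedModule)). intros z _. generalize (GC_real_cont r g Hr H z).
    rewrite continuity_pt_filterlim. auto.
Qed.
Lemma GC_real_bd r (g : R -> R) : 0 <= r ->
  (forall th, -r <= th <= 0 -> filterlim g (within (DD r) (locally th)) (locally (g th))) ->
  exists M, forall t, -r <= t <= 0 -> Rabs (g t) <= M.
Proof.
  intros Hr H.
  destruct (continuity_ab_maj (fun x => g (clamp r x)) (-r) 0 ltac:(lra)) as [M1 [HM1 _]].
  { intros; apply GC_real_cont; auto. }
  destruct (continuity_ab_maj (fun x => - g (clamp r x)) (-r) 0 ltac:(lra)) as [M2 [HM2 _]].
  { intros. apply continuity_pt_opp. apply GC_real_cont; auto. }
  exists (Rmax (g (clamp r M1)) (- g (clamp r M2))). intros t Ht.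
  specialize (HM1 t Ht). specialize (HM2 t Ht). rewrite clamp_id in HM1, HM2 by auto.
  unfold Rmax; destruct Rle_dec; split_Rabs; lra.
Qed.

Lemma GC_ex r f : 0 <= r -> GC r f -> ex_RInt (fun t => fst (f t)) (-r) 0 /\ ex_RInt (fun t => snd (f t)) (-r) 0.
Proof.
  intros Hr H. split; apply GC_real_ex; auto; intros th Hth; specialize (H th Hth);
  apply (fC_split (FF := within_filter _ _ _ _)) in H; destruct H; auto.
Qed.
Lemma GC_bd r f : 0 <= r -> GC r f -> exists M, forall t, -r <= t <= 0 -> Cmod (f t) <= M.
Proof.
  intros Hr H.
  destruct (GC_real_bd r (fun t => fst (f t)) Hr) as [M1 H1].
  { intros th Hth; specialize (H th Hth);
    apply (fC_split (FF := within_filter _ _ _ _)) in H; destruct H; auto. }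
  destruct (GC_real_bd r (fun t => snd (f t)) Hr) as [M2 H2].
  { intros th Hth; specialize (H th Hth);
    apply (fC_split (FF := within_filter _ _ _ _)) in H; destruct H; auto. }
  exists (M1 + M2). intros t Ht. eapply Rle_trans; [apply Cmod_le_comp|].
  specialize (H1 t Ht); specialize (H2 t Ht). lra.
Qed.

Lemma GC_plus r f g : GC r f -> GC r g -> GC r (fun t => Cplus (f t) (g t)).
Proof. intros Hf Hg th Hth. apply (fC_plus (FF := within_filter _ _ _ _)); auto. Qed.
Lemma GC_minus r f g : GC r f -> GC r g -> GC r (fun t => Cminus (f t) (g t)).
Proof. intros Hf Hg th Hth. apply (fC_minus (FF := within_filter _ _ _ _)); auto. Qed.
Lemma GC_mult r f g : GC r f -> GC r g -> GC r (fun t => Cmult (f t) (g t)).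
Proof. intros Hf Hg th Hth. apply (fC_mult (FF := within_filter _ _ _ _)); auto. Qed.
Lemma GC_const r (c : C) : GC r (fun _ => c).
Proof. intros th Hth. apply (fC_const (FF := within_filter _ _ _ _)). Qed.
Lemma GC_cexp r f : GC r f -> GC r (fun t => cexp (f t)).
Proof. intros Hf th Hth. apply (fC_cexp (FF := within_filter _ _ _ _)); auto. Qed.
Lemma GC_RtoC r (u : R -> R) : (forall t, continuity_pt u t) -> GC r (fun t => RtoC (u t)).
Proof.
  intros Hu th Hth. apply (fC_RtoC (FF := within_filter _ _ _ _)).
  eapply filterlim_filter_le_1; [apply filter_le_within|]. apply continuity_pt_filterlim; auto.
Qed.
Lemma GC_csum r n (F : nat -> R -> C) : (forall i, (i < n)%nat -> GC r (F i)) -> GC r (fun t => csum n (fun i => F i t)).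
Proof.
  induction n; intros H; simpl. apply GC_const.
  apply GC_plus. apply IHn; intros; apply H; lia. apply H; lia.
Qed.

Lemma RInt_lin2 (u v : R -> R) a b c d : ex_RInt u a b -> ex_RInt v a b ->
  RInt (fun t => c * u t + d * v t) a b = c * RInt u a b + d * RInt v a b.
Proof.
  intros Hu Hv.
  rewrite (RInt_plus (V:=R_CompleteNormedModule) (fun t => c * u t) (fun t => d * v t)).
  - assert (A1 : RInt (fun t => c * u t) a b = c * RInt u a b) by exact (RInt_scal (V:=R_CompleteNormedModule) u a b c Hu).
    assert (A2 : RInt (fun t => d * v t) a b = d * RInt v a b) by exact (RInt_scal (V:=R_CompleteNormedModule) v a b d Hv).
    rewrite <- A1, <- A2. reflexivity.
  - apply (ex_RInt_scal (V:=R_NormedModule)); auto.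
  - apply (ex_RInt_scal (V:=R_NormedModule)); auto.
Qed.

Lemma cint_plus r f g : 0 <= r -> GC r f -> GC r g ->
  cint (fun t => Cplus (f t) (g t)) (-r) 0 = Cplus (cint f (-r) 0) (cint g (-r) 0).
Proof.
  intros Hr Hf Hg. destruct (GC_ex r f Hr Hf) as [F1 F2]. destruct (GC_ex r g Hr Hg) as [G1 G2].
  unfold cint. apply injective_projections; simpl.
  - rewrite <- (Rmult_1_l (RInt (fun t => Re (f t)) _ _)), <- (Rmult_1_l (RInt (fun t => Re (g t)) _ _)).
    rewrite <- RInt_lin2 by auto. apply RInt_ext. intros; simpl; unfold Re, Im; simpl; ring.
  - rewrite <- (Rmult_1_l (RInt (fun t => Im (f t)) _ _)), <- (Rmult_1_l (RInt (fun t => Im (g t)) _ _)).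
    rewrite <- RInt_lin2 by auto. apply RInt_ext. intros; simpl; unfold Re, Im; simpl; ring.
Qed.
Lemma cint_scal r c f : 0 <= r -> GC r f ->
  cint (fun t => Cmult c (f t)) (-r) 0 = Cmult c (cint f (-r) 0).
Proof.
  intros Hr Hf. destruct (GC_ex r f Hr Hf) as [F1 F2].
  unfold cint. apply injective_projections; simpl.
  - replace (fst c * RInt (fun t => Re (f t)) (- r) 0 - snd c * RInt (fun t => Im (f t)) (- r) 0)
      with (fst c * RInt (fun t => Re (f t)) (- r) 0 + (- snd c) * RInt (fun t => Im (f t)) (- r) 0) by ring.
    rewrite <- RInt_lin2 by auto. apply RInt_ext. intros; simpl; unfold Re, Im; ring.
  - replace (fst c * RInt (fun t => Im (f t)) (- r) 0 + snd c * RInt (fun t => Re (f t)) (- r) 0)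
      with (snd c * RInt (fun t => Re (f t)) (- r) 0 + fst c * RInt (fun t => Im (f t)) (- r) 0) by ring.
    rewrite <- RInt_lin2 by auto. apply RInt_ext. intros; simpl; unfold Re, Im; ring.
Qed.
Lemma cint_minus r f g : 0 <= r -> GC r f -> GC r g ->
  cint (fun t => Cminus (f t) (g t)) (-r) 0 = Cminus (cint f (-r) 0) (cint g (-r) 0).
Proof.
  intros Hr Hf Hg.
  assert (E : forall t, Cminus (f t) (g t) = Cplus (f t) (Cmult (RtoC (-1)) (g t))).
  { intros; apply injective_projections; simpl; ring. }
  unfold cint at 1. rewrite (RInt_ext _ (fun t => Re (Cplus (f t) (Cmult (RtoC (-1)) (g t))))) by (intros; rewrite E; auto).
  rewrite (RInt_ext (fun t => Im (Cminus (f t) (g t))) (fun t => Im (Cplus (f t) (Cmult (RtoC (-1)) (g t))))) by (intros; rewrite E; auto).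
  change (cint (fun t => Cplus (f t) (Cmult (RtoC (-1)) (g t))) (-r) 0 = Cminus (cint f (-r) 0) (cint g (-r) 0)).
  rewrite cint_plus, cint_scal; auto.
  - apply injective_projections; simpl; ring.
  - apply GC_mult; auto. apply GC_const.
Qed.
Lemma cint_csum r n (F : nat -> R -> C) : 0 <= r -> (forall i, (i < n)%nat -> GC r (F i)) ->
  cint (fun t => csum n (fun i => F i t)) (-r) 0 = csum n (fun i => cint (F i) (-r) 0).
Proof.
  intros Hr. induction n; intros H; simpl.
  - unfold cint. simpl. rewrite !RInt_const. apply injective_projections; simpl; unfold scal; simpl; unfold mult; simpl; ring.
  - rewrite cint_plus; [rewrite IHn; [reflexivity| intros; apply H; lia] | auto | apply GC_csum; intros; apply H; lia | apply H; lia].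
Qed.
Lemma cint_ext r f g : (forall t, -r <= t <= 0 -> f t = g t) -> 0 <= r -> cint f (-r) 0 = cint g (-r) 0.
Proof.
  intros H Hr. unfold cint. f_equal; apply RInt_ext; intros x Hx;
  rewrite Rmin_left in Hx by lra; rewrite Rmax_right in Hx by lra; rewrite H; auto; lra.
Qed.

Definition UC (r : R) (F : R -> R -> C) (F0 : R -> C) : Prop :=
  forall eta, 0 < eta -> exists d, 0 < d /\ forall e t, 0 < e < d -> -r <= t <= 0 -> Cmod (Cminus (F e t) (F0 t)) < eta.

Lemma Cmod_sub_split a b c d : Cmod (Cminus (Cplus a b) (Cplus c d)) <= Cmod (Cminus a c) + Cmod (Cminus b d).
Proof.
  replace (Cminus (Cplus a b) (Cplus c d)) with (Cplus (Cminus a c) (Cminus b d)) by ring.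
  apply Cmod_triangle.
Qed.

Lemma UC_plus r F G F0 G0 : UC r F F0 -> UC r G G0 -> UC r (fun e t => Cplus (F e t) (G e t)) (fun t => Cplus (F0 t) (G0 t)).
Proof.
  intros HF HG eta He.
  destruct (HF (eta/2) ltac:(lra)) as [d1 [Hd1 H1]]. destruct (HG (eta/2) ltac:(lra)) as [d2 [Hd2 H2]].
  exists (Rmin d1 d2). split. apply Rmin_pos; auto. intros e t Het Ht.
  assert (e < d1) by (eapply Rlt_le_trans; [apply Het|apply Rmin_l]).
  assert (e < d2) by (eapply Rlt_le_trans; [apply Het|apply Rmin_r]).
  eapply Rle_lt_trans; [apply Cmod_sub_split|].
  specialize (H1 e t ltac:(lra) Ht). specialize (H2 e t ltac:(lra) Ht). lra.
Qed.
Lemma UC_mult r F G F0 G0 : 0 <= r -> GC r F0 -> GC r G0 -> UC r F F0 -> UC r G G0 ->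
  UC r (fun e t => Cmult (F e t) (G e t)) (fun t => Cmult (F0 t) (G0 t)).
Proof.
  intros Hr GF GG HF HG eta He.
  destruct (GC_bd r F0 Hr GF) as [MF HMF]. destruct (GC_bd r G0 Hr GG) as [MG HMG].
  set (K := 1 + Rabs MF + Rabs MG).
  assert (HK : 1 <= K) by (unfold K; generalize (Rabs_pos MF) (Rabs_pos MG); lra).
  set (h := Rmin 1 (eta / K)).
  assert (Hh : 0 < h) by (apply Rmin_pos; [lra|apply Rdiv_lt_0_compat; lra]).
  assert (Hh1 : h <= 1) by apply Rmin_l.
  assert (Hh2 : h * K <= eta).
  { assert (h <= eta / K) by apply Rmin_r. apply Rmult_le_compat_r with (r := K) in H; [|lra].
    unfold Rdiv in H. rewrite Rmult_assoc, Rinv_l in H by lra. lra. }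
  destruct (HF h Hh) as [d1 [Hd1 H1]]. destruct (HG h Hh) as [d2 [Hd2 H2]].
  exists (Rmin d1 d2). split. apply Rmin_pos; auto. intros e t Het Ht.
  assert (e < d1) by (eapply Rlt_le_trans; [apply Het|apply Rmin_l]).
  assert (e < d2) by (eapply Rlt_le_trans; [apply Het|apply Rmin_r]).
  specialize (H1 e t ltac:(lra) Ht). specialize (H2 e t ltac:(lra) Ht).
  specialize (HMF t Ht). specialize (HMG t Ht).
  set (a := Cminus (F e t) (F0 t)) in *. set (b := Cminus (G e t) (G0 t)) in *.
  replace (Cminus (Cmult (F e t) (G e t)) (Cmult (F0 t) (G0 t)))
    with (Cplus (Cplus (Cmult a b) (Cmult a (G0 t))) (Cmult (F0 t) b)) by (unfold a, b; ring).
  eapply Rle_lt_trans; [apply Cmod_triangle|].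
  eapply Rle_lt_trans; [apply Rplus_le_compat_r, Cmod_triangle|].
  rewrite !Cmod_mult.
  assert (0 <= Cmod a) by apply Cmod_ge_0. assert (0 <= Cmod b) by apply Cmod_ge_0.
  assert (Cmod (G0 t) <= Rabs MG) by (eapply Rle_trans; [apply HMG|apply RRle_abs]).
  assert (Cmod (F0 t) <= Rabs MF) by (eapply Rle_trans; [apply HMF|apply RRle_abs]).
  assert (Cmod a * Cmod b <= h * h) by (apply Rmult_le_compat; lra).
  assert (Cmod a * Cmod (G0 t) <= h * Rabs MG) by (apply Rmult_le_compat; try lra; apply Cmod_ge_0).
  assert (Cmod (F0 t) * Cmod b <= Rabs MF * h) by (apply Rmult_le_compat; try lra; apply Cmod_ge_0).
  assert (Cmod a * Cmod b < h) by nra.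
  unfold K in Hh2. nra.
Qed.
Lemma UC_const r (c : R -> C) L : cv0 c L -> UC r (fun e _ => c e) (fun _ => L).
Proof.
  intros H eta He. destruct (cvC_get c L H eta He) as [d [Hd H']]. exists d; split; auto.
Qed.
Lemma UC_fix r (f : R -> C) : UC r (fun _ t => f t) f.
Proof.
  intros eta He. exists 1; split; [lra|]. intros. replace (Cminus (f t) (f t)) with (RtoC 0) by ring.
  rewrite Cmod_0; auto.
Qed.
Lemma UC_csum r n (F : nat -> R -> R -> C) F0 : (forall i, (i < n)%nat -> UC r (F i) (F0 i)) ->
  UC r (fun e t => csum n (fun i => F i e t)) (fun t => csum n (fun i => F0 i t)).
Proof.
  induction n; intros H; simpl. apply (UC_fix r (fun _ => RtoC 0)).
  apply UC_plus. apply IHn; intros; apply H; lia. apply H; lia.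
Qed.
Lemma UC_cint r F F0 : 0 < r -> UC r F F0 -> (exists d, 0 < d /\ forall e, 0 < e < d -> GC r (F e)) -> GC r F0 ->
  cv0 (fun e => cint (F e) (-r) 0) (cint F0 (-r) 0).
Proof.
  intros Hr HU [d0 [Hd0 HG]] HG0. apply cvC_eps. intros eta He.
  destruct (HU (eta / (4 * r))) as [d [Hd H]]. { apply Rdiv_lt_0_compat; lra. }
  exists (Rmin d d0). split. apply Rmin_pos; auto. intros e Het.
  assert (e < d) by (eapply Rlt_le_trans; [apply Het|apply Rmin_l]).
  assert (e < d0) by (eapply Rlt_le_trans; [apply Het|apply Rmin_r]).
  assert (G1 : GC r (F e)) by (apply HG; lra).
  rewrite <- cint_minus by (auto; lra).
  destruct (GC_ex r _ ltac:(lra) (GC_minus r _ _ G1 HG0)) as [E1 E2].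
  eapply Rle_lt_trans; [apply Cmod_le_comp|]. unfold cint; cbn [fst snd].
  assert (B1 : Rabs (RInt (fun t => Re (Cminus (F e t) (F0 t))) (-r) 0) <= (0 - - r) * (eta / (4 * r))).
  { apply abs_RInt_le_const; [lra|exact E1|]. intros t Ht.
    eapply Rle_trans; [apply re_le_Cmod|]. apply Rlt_le, H; auto; lra. }
  assert (B2 : Rabs (RInt (fun t => Im (Cminus (F e t) (F0 t))) (-r) 0) <= (0 - - r) * (eta / (4 * r))).
  { apply abs_RInt_le_const; [lra|exact E2|]. intros t Ht.
    eapply Rle_trans; [apply abs_snd_le|]. apply Rlt_le, H; auto; lra. }
  replace ((0 - - r) * (eta / (4 * r))) with (eta / 4) in B1, B2 by (field; lra).
  assert (eta / 2 < eta) by lra. lra.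
Qed.

Lemma sin_abs_le y : Rabs (sin y) <= Rabs y.
Proof.
  destruct (MVT_gen sin 0 y cos) as [c [_ Hm]].
  - intros x _. auto_derive; auto. ring.
  - intros x _. apply continuity_sin.
  - rewrite sin_0 in Hm. rewrite Rminus_0_r in Hm. rewrite Rminus_0_r in Hm. rewrite Hm.
    rewrite Rabs_mult. generalize (COS_bound c); intros.
    assert (Rabs (cos c) <= 1) by (apply Rabs_le; lra).
    generalize (Rabs_pos y). nra.
Qed.
Lemma cos_abs_le y : Rabs (cos y - 1) <= Rabs y.
Proof.
  destruct (MVT_gen cos 0 y (fun x => - sin x)) as [c [_ Hm]].
  - intros x _. auto_derive; auto. ring.
  - intros x _. apply continuity_cos.
  - rewrite cos_0 in Hm. rewrite Rminus_0_r in Hm. rewrite Hm.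
    rewrite Rabs_mult. generalize (SIN_bound c); intros.
    assert (Rabs (- sin c) <= 1) by (apply Rabs_le; lra).
    generalize (Rabs_pos y). nra.
Qed.
Lemma exp_abs_le x : Rabs x <= 1 -> Rabs (exp x - 1) <= 3 * Rabs x.
Proof.
  intros Hx. generalize (exp_ineq1_le x) (exp_ineq1_le (-x)); intros E1 E2.
  assert (Hex : exp x <= 3).
  { eapply Rle_trans; [|apply exp_le_3]. destruct (Rle_dec x 1); [|apply Rabs_le_between in Hx; lra].
    destruct (Req_dec x 1) as [->|]; [lra|]. apply Rlt_le, exp_increasing; lra. }
  assert (Hp := exp_pos x).
  assert (exp x * exp (-x) = 1) by (rewrite <- exp_plus; replace (x + - x) with 0 by ring; apply exp_0).
  apply Rabs_le. split.
  - assert (x >= - Rabs x) by (split_Rabs; lra). assert (0 <= Rabs x) by apply Rabs_pos. lra.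
  - (* exp x - 1 = exp x (1 - exp(-x)) <= exp x * x *)
    assert (exp x - 1 <= exp x * x) by nra.
    destruct (Rle_dec 0 x). { rewrite Rabs_right by lra. nra. }
    assert (exp x < 1) by (rewrite <- exp_0; apply exp_increasing; lra).
    assert (0 <= Rabs x) by apply Rabs_pos. lra.
Qed.
Lemma cexp_near0 eta : 0 < eta -> exists rho, 0 < rho /\ forall z, Cmod z < rho -> Cmod (Cminus (cexp z) (RtoC 1)) < eta.
Proof.
  intros He. exists (Rmin 1 (eta / 12)). split. apply Rmin_pos; lra.
  intros [x y] Hz. assert (Hz1 : Cmod (x, y) < 1) by (eapply Rlt_le_trans; [apply Hz|apply Rmin_l]).
  assert (Hz2 : Cmod (x, y) < eta / 12) by (eapply Rlt_le_trans; [apply Hz|apply Rmin_r]).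
  generalize (abs_fst_le (x, y)) (abs_snd_le (x, y)); simpl; intros Ax Ay.
  eapply Rle_lt_trans; [apply Cmod_le_comp|]. unfold cexp; simpl.
  assert (Hex : Rabs (exp x - 1) <= 3 * Rabs x) by (apply exp_abs_le; lra).
  assert (Hb : exp x <= 4). { apply Rabs_le_between in Hex. assert (Rabs x <= 1) by lra. lra. }
  assert (Hp := exp_pos x).
  generalize (sin_abs_le y) (cos_abs_le y); intros S1 C1.
  replace (exp x * cos y + - (1)) with (exp x * (cos y - 1) + (exp x - 1)) by ring.
  replace (exp x * sin y + - (0)) with (exp x * sin y) by ring.
  eapply Rle_lt_trans. apply Rplus_le_compat_r. apply Rabs_triang.
  rewrite !Rabs_mult. rewrite (Rabs_right (exp x)) by lra.
  assert (exp x * Rabs (cos y - 1) <= 4 * Rabs y) by (apply Rmult_le_compat; try lra; apply Rabs_pos).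
  assert (exp x * Rabs (sin y) <= 4 * Rabs y) by (apply Rmult_le_compat; try lra; apply Rabs_pos).
  lra.
Qed.

Lemma UC_cexp_lin r (lam : R -> C) lam0 : 0 <= r -> fst lam0 = 0 -> cv0 lam lam0 ->
  UC r (fun e t => cexp (Cmult (RtoC (-(t + r))) (lam e))) (fun t => cexp (Cmult (RtoC (-(t + r))) lam0)).
Proof.
  intros Hr H0 Hl eta He. destruct (cexp_near0 eta He) as [rho [Hrho Hc]].
  destruct (cvC_get lam lam0 Hl (rho / (r + 1))) as [d [Hd H]]. { apply Rdiv_lt_0_compat; lra. }
  exists d; split; auto. intros e t Het Ht.
  set (z0 := Cmult (RtoC (-(t + r))) lam0).
  replace (Cmult (RtoC (-(t + r))) (lam e)) with (Cplus z0 (Cmult (RtoC (-(t + r))) (Cminus (lam e) lam0))) by (unfold z0; ring).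
  rewrite cexp_add. replace (Cminus (Cmult (cexp z0) (cexp (Cmult (RtoC (-(t + r))) (Cminus (lam e) lam0)))) (cexp z0))
    with (Cmult (cexp z0) (Cminus (cexp (Cmult (RtoC (-(t + r))) (Cminus (lam e) lam0))) (RtoC 1))) by ring.
  rewrite Cmod_mult, Cmod_cexp. unfold z0. simpl. rewrite H0. replace (- (t + r) * 0 - 0 * snd lam0) with 0 by ring.
  rewrite exp_0, Rmult_1_l. apply Hc. rewrite Cmod_mult, Cmod_R.
  specialize (H e Het). rewrite Rabs_left1 by lra.
  assert (0 <= Cmod (Cminus (lam e) lam0)) by apply Cmod_ge_0.
  assert (rho / (r + 1) * (r + 1) = rho) by (field; lra).
  assert (- - (t + r) <= r + 1) by lra. assert (0 <= - - (t + r)) by lra.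
  apply Rle_lt_trans with ((r + 1) * Cmod (Cminus (lam e) lam0)). apply Rmult_le_compat_r; lra.
  nra.
Qed.

Definition qf (m s : R) := (1 - exp (- (2 * m * s))) / m.

Lemma UC_q r (mu : R -> R) eps0 : 0 <= r -> 0 < eps0 -> (forall e, 0 < e < eps0 -> 0 < mu e) -> cvR mu 0 ->
  UC r (fun e t => RtoC (qf (mu e) (t + r))) (fun t => RtoC (2 * (t + r))).
Proof.
  intros Hr He0 Hpos Hmu eta He.
  destruct (cvR_get mu 0 Hmu (eta / (2 * r ^ 2 + 1))) as [d [Hd H]]. { apply Rdiv_lt_0_compat; nra. }
  exists (Rmin d eps0). split. apply Rmin_pos; lra. intros e t Het Ht.
  assert (e < d) by (eapply Rlt_le_trans; [apply Het|apply Rmin_l]).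
  assert (e < eps0) by (eapply Rlt_le_trans; [apply Het|apply Rmin_r]).
  specialize (Hpos e ltac:(lra)). specialize (H e ltac:(lra)). rewrite Rminus_0_r, Rabs_right in H by lra.
  replace (Cminus (RtoC (qf (mu e) (t + r))) (RtoC (2 * (t + r)))) with (RtoC (qf (mu e) (t + r) - 2 * (t + r)))
    by (apply injective_projections; simpl; ring).
  rewrite Cmod_R. unfold qf.
  destruct (Req_dec (t + r) 0) as [E|E].
  { rewrite E. rewrite Rmult_0_r, Ropp_0, exp_0. replace ((1 - 1) / mu e - 2 * 0) with 0 by (field; lra).
    rewrite Rabs_R0; auto. }
  set (s := t + r) in *. assert (Hs : 0 < s) by (unfold s in *; lra).
  set (y := 2 * mu e * s). assert (Hy : 0 < y) by (unfold y; nra).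
  replace ((1 - exp (- y)) / mu e - 2 * s) with (2 * s * ((1 - exp (- y)) / y - 1)) by (unfold y; field; lra).
  rewrite Rabs_mult, Rabs_right by lra. generalize (ratio1 y Hy); intros R1.
  apply Rle_lt_trans with (2 * s * (y / 2)). apply Rmult_le_compat_l; lra.
  unfold y. assert (s <= r) by (unfold s; lra).
  assert (mu e * (2 * r ^ 2 + 1) < eta).
  { apply Rmult_lt_compat_r with (r := 2 * r ^ 2 + 1) in H; [|nra]. unfold Rdiv in H.
    rewrite Rmult_assoc, Rinv_l in H by nra. lra. }
  assert (s * s <= r * r) by nra. assert (0 < mu e) by auto. nra.
Qed.

Lemma cv_q r (mu : R -> R) eps0 : 0 < r -> 0 < eps0 -> (forall e, 0 < e < eps0 -> 0 < mu e) -> cvR mu 0 ->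
  cvR (fun e => qf (mu e) r) (2 * r).
Proof.
  intros Hr He0 Hpos Hmu. apply cvR_eps. intros eta He.
  destruct (UC_q r mu eps0 ltac:(lra) He0 Hpos Hmu eta He) as [d [Hd H]].
  exists d; split; auto. intros e Het. specialize (H e 0 Het ltac:(lra)).
  rewrite Rplus_0_l in H.
  replace (Cminus (RtoC (qf (mu e) r)) (RtoC (2 * r))) with (RtoC (qf (mu e) r - 2 * r)) in H
    by (apply injective_projections; simpl; ring).
  rewrite Cmod_R in H. auto.
Qed.

Definition rho2 (y : R) := (exp (- y) - 1 + y) / y ^ 2.
Lemma cv_rho2 r (mu : R -> R) eps0 : 0 < r -> 0 < eps0 -> (forall e, 0 < e < eps0 -> 0 < mu e) -> cvR mu 0 ->
  cvR (fun e => rho2 (2 * mu e * r)) (1 / 2).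
Proof.
  intros Hr He0 Hpos Hmu. apply cvR_eps. intros eta He.
  destruct (cvR_get mu 0 Hmu (eta / (r + 1))) as [d [Hd H]]. { apply Rdiv_lt_0_compat; lra. }
  exists (Rmin d eps0). split. apply Rmin_pos; lra. intros e Het.
  assert (e < d) by (eapply Rlt_le_trans; [apply Het|apply Rmin_l]).
  assert (e < eps0) by (eapply Rlt_le_trans; [apply Het|apply Rmin_r]).
  specialize (Hpos e ltac:(lra)). specialize (H e ltac:(lra)). rewrite Rminus_0_r, Rabs_right in H by lra.
  assert (Hy : 0 < 2 * mu e * r) by nra.
  eapply Rle_lt_trans; [apply ratio2; auto|].
  assert (mu e * (r + 1) < eta).
  { apply Rmult_lt_compat_r with (r := r + 1) in H; [|lra]. unfold Rdiv in H.
    rewrite Rmult_assoc, Rinv_l in H by lra. lra. }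
  nra.
Qed.

Lemma cont_derive f : (forall t, ex_derive f t) -> forall t, continuity_pt f t.
Proof. intros H t. apply continuity_pt_filterlim. apply (ex_derive_continuous (K:=R_AbsRing) (V:=R_NormedModule)). auto. Qed.

Lemma GC_kexp r (lam : C) : GC r (fun t => cexp (Cmult (RtoC (-(t + r))) lam)).
Proof.
  apply GC_cexp. apply GC_mult; [|apply GC_const]. apply GC_RtoC. apply cont_derive. intros; auto_derive; auto.
Qed.
Lemma GC_kq r m : m <> 0 -> GC r (fun t => RtoC (qf m (t + r))).
Proof. intros Hm. apply GC_RtoC. apply cont_derive. intros; unfold qf; auto_derive; auto. Qed.
Lemma GC_lin r : GC r (fun t => RtoC (2 * (t + r))).
Proof. apply GC_RtoC. apply cont_derive. intros; auto_derive; auto. Qed.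

Lemma vm_ext n u M M' j : (forall i, (i < n)%nat -> M i j = M' i j) -> vm n u M j = vm n u M' j.
Proof. intros H; unfold vm; apply csum_ext; intros; rewrite H; auto. Qed.
Lemma mv_ext n M M' v i : (forall j, (j < n)%nat -> M i j = M' i j) -> mv n M v i = mv n M' v i.
Proof. intros H; unfold mv; apply csum_ext; intros; rewrite H; auto. Qed.

Lemma vm_comb n u (x y z : C) (A B : rmat) j : (j < n)%nat ->
  vm n u (fun i j => Cplus (Cplus (Cmult x (idm i j)) (Cmult y (RtoC (A i j)))) (Cmult z (RtoC (B i j)))) j
  = Cplus (Cplus (Cmult x (u j)) (Cmult y (vm n u (rtoc_mat A) j))) (Cmult z (vm n u (rtoc_mat B) j)).
Proof.
  intros Hj. unfold vm.
  rewrite (csum_ext n _ (fun i => Cplus (Cplus (Cmult x (Cmult (u i) (idm i j))) (Cmult y (Cmult (u i) (rtoc_mat A i j)))) (Cmult z (Cmult (u i) (rtoc_mat B i j))))).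
  - rewrite !csum_plus, !csum_scal, csum_delta_r; auto.
  - intros; unfold rtoc_mat; ring.
Qed.
Lemma mv_comb n v (x y z : C) (A B : rmat) i : (i < n)%nat ->
  mv n (fun i j => Cplus (Cplus (Cmult x (idm i j)) (Cmult y (RtoC (A i j)))) (Cmult z (RtoC (B i j)))) v i
  = Cplus (Cplus (Cmult x (v i)) (Cmult y (mv n (rtoc_mat A) v i))) (Cmult z (mv n (rtoc_mat B) v i)).
Proof.
  intros Hi. unfold mv.
  rewrite (csum_ext n _ (fun j => Cplus (Cplus (Cmult x (Cmult (idm i j) (v j))) (Cmult y (Cmult (rtoc_mat A i j) (v j)))) (Cmult z (Cmult (rtoc_mat B i j) (v j))))).
  - rewrite !csum_plus, !csum_scal, csum_delta_l; auto.
  - intros; unfold rtoc_mat; ring.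
Qed.

Lemma vm_charmat n u A B r z j : (j < n)%nat ->
  vm n u (charmat A B r z) j = Cplus (Cplus (Cmult z (u j)) (Cmult (RtoC (-1)) (vm n u (rtoc_mat A) j)))
                                       (Cmult (Copp (cexp (Cmult (RtoC (- r)) z))) (vm n u (rtoc_mat B) j)).
Proof.
  intros Hj. rewrite <- vm_comb by auto. apply vm_ext. intros i _. unfold charmat.
  apply injective_projections; simpl; ring.
Qed.
Lemma mv_charmat n v A B r z i : (i < n)%nat ->
  mv n (charmat A B r z) v i = Cplus (Cplus (Cmult z (v i)) (Cmult (RtoC (-1)) (mv n (rtoc_mat A) v i)))
                                       (Cmult (Copp (cexp (Cmult (RtoC (- r)) z))) (mv n (rtoc_mat B) v i)).
Proof.
  intros Hi. rewrite <- mv_comb by auto. apply mv_ext. intros j _. unfold charmat.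
  apply injective_projections; simpl; ring.
Qed.
Lemma vm_Mmat n u A B r z j : (j < n)%nat ->
  vm n u (Mmat A B r z) j = Cplus (Cplus (Cmult (Cplus (Cmult (RtoC 2) z) (Cconj z)) (u j)) (Cmult (RtoC (-1)) (vm n u (rtoc_mat A) j)))
                                       (Cmult (Copp (cexp (Cmult (RtoC (- r)) (Cplus (Cmult (RtoC 2) z) (Cconj z))))) (vm n u (rtoc_mat B) j)).
Proof.
  intros Hj. rewrite <- vm_comb by auto. apply vm_ext. intros i _. unfold Mmat.
  apply injective_projections; simpl; ring.
Qed.

Lemma qf_exp m s : m <> 0 -> RtoC (exp (- (2 * m * s))) = Cminus (RtoC 1) (Cmult (RtoC m) (RtoC (qf m s))).
Proof. intros Hm. unfold qf. apply injective_projections; simpl; field; auto. Qed.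
Lemma s_eq mu om : Cplus (Cmult (RtoC 2) (mu, om)) (Cconj (mu, om)) = Cplus (mu, om) (Cmult (RtoC 2) (RtoC mu)).
Proof. apply injective_projections; simpl; ring. Qed.
Lemma cexp_shift r z m : cexp (Cmult (RtoC (- r)) (Cplus z (Cmult (RtoC 2) (RtoC m)))) =
  Cmult (cexp (Cmult (RtoC (- r)) z)) (RtoC (exp (- (2 * m * r)))).
Proof.
  rewrite <- cexp_real, <- cexp_add. f_equal. apply injective_projections; simpl; ring.
Qed.

Lemma h1_id n A B r mu om (P : cvec) j : (j < n)%nat -> mu <> 0 ->
  vm n P (charmat A B r (mu, om)) j = RtoC 0 ->
  vm n P (Mmat A B r (mu, om)) j = Cmult (RtoC mu) (Cplus (Cmult (RtoC 2) (P j))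
     (Cmult (vm n P (rtoc_mat B) j) (Cmult (cexp (Cmult (RtoC (- r)) (mu, om))) (RtoC (qf mu r))))).
Proof.
  intros Hj Hm H. rewrite vm_charmat in H by auto. rewrite vm_Mmat by auto.
  rewrite s_eq, cexp_shift, qf_exp by auto.
  set (X := vm n P (rtoc_mat A) j) in *. set (Y := vm n P (rtoc_mat B) j) in *.
  set (a := cexp (Cmult (RtoC (- r)) (mu, om))) in *.
  assert (HX : X = Cplus (Cmult (mu, om) (P j)) (Cmult (Copp a) Y)).
  { transitivity (Cplus X (RtoC 0)); [ring|]. rewrite <- H.
    apply injective_projections; simpl; ring. }
  rewrite HX. apply injective_projections; simpl; ring.
Qed.

Lemma dot_ext n u v u' v' : (forall i, (i < n)%nat -> u i = u' i) -> (forall i, (i < n)%nat -> v i = v' i) -> dot n u v = dot n u' v'.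
Proof. intros H1 H2. unfold dot. apply csum_ext. intros. rewrite H1, H2; auto. Qed.
Lemma dot_vadd n u x y : dot n u (vadd x y) = Cplus (dot n u x) (dot n u y).
Proof. unfold dot, vadd. rewrite <- csum_plus. apply csum_ext. intros; ring. Qed.
Lemma dot_vsub n u x y : dot n u (vsub x y) = Cminus (dot n u x) (dot n u y).
Proof. unfold dot, vsub. rewrite <- csum_minus. apply csum_ext. intros; ring. Qed.
Lemma dot_vscal n u c x : dot n u (vscal c x) = Cmult c (dot n u x).
Proof. unfold dot, vscal. rewrite <- csum_scal. apply csum_ext. intros; ring. Qed.
Lemma dot_vscal_l n u c x : dot n (vscal c u) x = Cmult c (dot n u x).
Proof. unfold dot, vscal. rewrite <- csum_scal. apply csum_ext. intros; ring. Qed.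
Lemma dot_mv n u M v : dot n u (mv n M v) = dot n (vm n u M) v.
Proof.
  unfold dot, mv, vm.
  rewrite (csum_ext n (fun i => Cmult (u i) (csum n (fun j => Cmult (M i j) (v j))))
                    (fun i => csum n (fun j => Cmult (Cmult (u i) (M i j)) (v j)))).
  - rewrite csum_swap. apply csum_ext. intros j _. rewrite (Cmult_comm (csum _ _)), <- csum_scal.
    apply csum_ext; intros; ring.
  - intros i _. rewrite <- csum_scal. apply csum_ext; intros; ring.
Qed.
Lemma vm_vscal n c u M j : vm n (vscal c u) M j = Cmult c (vm n u M j).
Proof. unfold vm, vscal. rewrite <- csum_scal. apply csum_ext. intros; ring. Qed.

Lemma charmat_conj A B r z i j : Cconj (charmat A B r z i j) = charmat A B r (Cconj z) i j.
Proof.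
  unfold charmat. replace (Cmult (RtoC (- r)) (Cconj z)) with (Cconj (Cmult (RtoC (- r)) z))
    by (apply injective_projections; simpl; ring).
  rewrite cexp_conj. unfold idm. destruct (Nat.eqb i j); apply injective_projections; simpl; ring.
Qed.
Lemma mv_conj n A B r z v i :
  mv n (charmat A B r (Cconj z)) (fun k => Cconj (v k)) i = Cconj (mv n (charmat A B r z) v i).
Proof.
  unfold mv. rewrite csum_conj. apply csum_ext. intros. rewrite Cconj_mult, charmat_conj. auto.
Qed.

Lemma dot_vint n r u F : 0 <= r -> (forall i, (i < n)%nat -> GC r (fun t => F t i)) ->
  dot n u (vint F (-r) 0) = cint (fun t => dot n u (F t)) (-r) 0.
Proof.
  intros Hr H. unfold dot at 2. rewrite cint_csum; auto.
  - unfold dot, vint. apply csum_ext. intros i Hi. rewrite cint_scal; auto.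
  - intros i Hi. apply GC_mult. apply GC_const. apply H; auto.
Qed.

Lemma bilin_use n B r lam P w : 0 <= r -> bilin n B r (Psifun lam P) w = RtoC 0 ->
  dot n P (w 0) = Copp (cint (fun t => Cmult (cexp (Cmult (RtoC (-(t + r))) lam)) (dot n (vm n P (rtoc_mat B)) (w t))) (-r) 0).
Proof.
  intros Hr H. unfold bilin, Psifun in H. rewrite dot_vscal_l in H.
  replace (Cmult (RtoC (- 0)) lam) with (RtoC 0) in H by (apply injective_projections; simpl; ring).
  rewrite cexp_0 in H.
  rewrite (cint_ext r _ (fun t => Cmult (cexp (Cmult (RtoC (-(t + r))) lam)) (dot n (vm n P (rtoc_mat B)) (w t)))) in H; auto.
  - set (I := cint _ _ _) in *. transitivity (Cminus (Cplus (Cmult (RtoC 1) (dot n P (w 0))) I) I); [ring|].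
    rewrite H. ring.
  - intros t _. rewrite dot_vscal_l, dot_mv. auto.
Qed.

Lemma F2_id n B r lam psi phi :
  let den := Cplus (dot n psi phi) (Cmult (Cmult (dot n psi (mv n (rtoc_mat B) phi)) (cexp (Cmult (RtoC (- r)) lam))) (RtoC r)) in
  den <> RtoC 0 ->
  let P := Psi0 n B r lam psi phi in
  Cplus (dot n P phi) (Cmult (Cmult (dot n P (mv n (rtoc_mat B) phi)) (cexp (Cmult (RtoC (- r)) lam))) (RtoC r)) = RtoC 1.
Proof.
  intros den Hd P. unfold P, Psi0. rewrite !dot_vscal_l. fold den.
  transitivity (Cmult (Cinv den) den). unfold den; ring. field. auto.
Qed.

Lemma F3_id n A B r lam (P phi : cvec) :
  (forall j, (j < n)%nat -> vm n P (charmat A B r lam) j = RtoC 0) ->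
  (forall i, (i < n)%nat -> mv n (charmat A B r lam) phi i = RtoC 0) ->
  let phic := fun i => Cconj (phi i) in
  Cmult (Cminus lam (Cconj lam)) (dot n P phic) =
  Cmult (dot n P (mv n (rtoc_mat B) phic)) (Cminus (cexp (Cmult (RtoC (- r)) lam)) (cexp (Cmult (RtoC (- r)) (Cconj lam)))).
Proof.
  intros HP Hphi phic.
  set (a := cexp (Cmult (RtoC (- r)) lam)). set (ac := cexp (Cmult (RtoC (- r)) (Cconj lam))).
  assert (E1 : Cmult lam (dot n P phic) = Cplus (dot n P (mv n (rtoc_mat A) phic)) (Cmult a (dot n P (mv n (rtoc_mat B) phic)))).
  { rewrite !dot_mv. unfold dot. rewrite <- csum_scal, <- csum_scal, <- csum_plus. apply csum_ext. intros j Hj.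
    specialize (HP j Hj). rewrite vm_charmat in HP by auto. fold a in HP.
    set (X := vm n P (rtoc_mat A) j) in *. set (Y := vm n P (rtoc_mat B) j) in *.
    assert (HX : X = Cplus (Cmult lam (P j)) (Cmult (Copp a) Y)).
    { transitivity (Cplus X (RtoC 0)); [ring|]. rewrite <- HP. apply injective_projections; simpl; ring. }
    rewrite HX. ring. }
  assert (E2 : Cmult (Cconj lam) (dot n P phic) = Cplus (dot n P (mv n (rtoc_mat A) phic)) (Cmult ac (dot n P (mv n (rtoc_mat B) phic)))).
  { unfold dot. rewrite <- csum_scal, <- csum_scal, <- csum_plus. apply csum_ext. intros i Hi.
    assert (Hc := Hphi i Hi). apply (f_equal Cconj) in Hc. rewrite <- mv_conj in Hc.
    rewrite mv_charmat in Hc by auto. fold phic ac in Hc.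
    set (X := mv n (rtoc_mat A) phic i) in *. set (Y := mv n (rtoc_mat B) phic i) in *.
    assert (HX : X = Cplus (Cmult (Cconj lam) (phic i)) (Cmult (Copp ac) Y)).
    { transitivity (Cplus X (RtoC 0)); [ring|]. replace (RtoC 0) with (Cconj (RtoC 0)) by (apply injective_projections; simpl; ring).
      rewrite <- Hc. apply injective_projections; simpl; ring. }
    rewrite HX. ring. }
  transitivity (Cminus (Cmult lam (dot n P phic)) (Cmult (Cconj lam) (dot n P phic))); [ring|].
  rewrite E1, E2. ring.
Qed.

Definition Vf n (u : cvec) (c20 c11 c02 : C) (w20 w11 w02 : R -> cvec) (t : R) : C :=
  Cplus (Cplus (Cmult c20 (dot n u (w20 t))) (Cmult c11 (dot n u (w11 t)))) (Cmult c02 (dot n u (w02 t))).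

Lemma cont_GC n r w i : (i < n)%nat -> cont_on n r w -> GC r (fun t => w t i).
Proof. intros Hi H th Hth. apply H; auto. Qed.

Lemma GC_dot n r u w : cont_on n r w -> GC r (fun t => dot n u (w t)).
Proof. intros H. unfold dot. apply GC_csum. intros i Hi. apply GC_mult. apply GC_const. apply cont_GC with n; auto. Qed.
Lemma GC_V n r u c20 c11 c02 w20 w11 w02 : cont_on n r w20 -> cont_on n r w11 -> cont_on n r w02 ->
  GC r (Vf n u c20 c11 c02 w20 w11 w02).
Proof.
  intros H1 H2 H3. unfold Vf. repeat apply GC_plus; apply GC_mult; try apply GC_const; apply GC_dot; auto.
Qed.

Lemma H2_expand n (B : rmat) r mu om (psi phi : cvec) (f20 f11 f02 f21 f12 : cvec) (w20 w11 w02 : R -> cvec) :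
  0 < r -> 
  cont_on n r w20 -> cont_on n r w11 -> cont_on n r w02 ->
  let lam := (mu, om) : C in
  let P := Psi0 n B r lam psi phi in
  bilin n B r (Psifun lam P) w20 = RtoC 0 ->
  bilin n B r (Psifun lam P) w11 = RtoC 0 ->
  bilin n B r (Psifun lam P) w02 = RtoC 0 ->
  let g := fun f => dot n P f in
  let u := vm n P (rtoc_mat B) in
  let s := Cplus (Cmult (RtoC 2) lam) (Cconj lam) in
  let E := cexp (Cmult (RtoC (- r)) s) in
  let c20 := Cmult (RtoC 2) (g f11) in
  let c11 := Cplus (g f20) (Cmult (RtoC 2) (Cconj (g f11))) in
  let c02 := Cconj (g f02) in
  let V := Vf n u c20 c11 c02 w20 w11 w02 in
  let Kl := fun t => cexp (Cmult (RtoC (-(t + r))) lam) in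
  let phic := fun i => Cconj (phi i) in
  dot n P (vsub (mv n (rtoc_mat B) (R1vec r lam phi (g f20) (g f11) (g f02) (g f21) (g f12) w20 w11 w02))
                (R2vec phi (g f20) (g f11) (g f02) (g f21) (g f12) f21 w20 w11 w02))
  = Cminus (Cminus (Cminus (Cminus (Cmult (Copp (Cdiv (g f21) (Cplus lam (Cconj lam))))
                                   (Cmult (Cminus (cexp (Cmult (RtoC (- r)) lam)) E) (dot n u phi)))
                            (Cmult (Cdiv (Cconj (g f12)) (Cmult (RtoC 2) lam))
                                   (Cmult (Cminus (cexp (Cmult (RtoC (- r)) (Cconj lam))) E) (dot n u phic))))
                     (Cmult E (cint (fun t => Cmult (cexp (Cmult (RtoC (- t)) s)) (V t)) (-r) 0)))
              (Cminus (Cplus (Cmult (g f21) (dot n P phi)) (Cmult (Cconj (g f12)) (dot n P phic))) (g f21)))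
        (Copp (cint (fun t => Cmult (Kl t) (V t)) (-r) 0)).
Proof.
  intros Hr C1 C2 C3 lam P B1 B2 B3 g u s E c20 c11 c02 V Kl phic.
  apply bilin_use in B1; [|lra]. apply bilin_use in B2; [|lra]. apply bilin_use in B3; [|lra].
  unfold R1vec, R2vec. cbv zeta. fold s E.
  rewrite dot_vsub, dot_mv. fold u.
  rewrite !dot_vsub, !dot_vscal, !dot_vadd, !dot_vsub, !dot_vscal, !dot_vadd, !dot_vscal.
  rewrite B1, B2, B3.
  rewrite dot_vint; [|lra|].
  2:{ intros i Hi. apply GC_mult. apply GC_cexp, GC_mult; [|apply GC_const]. apply GC_RtoC. apply cont_derive; intros; auto_derive; auto.
      repeat apply GC_plus; apply GC_mult; try apply GC_const; apply cont_GC with n; auto. }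
  assert (GK : GC r Kl).
  { apply GC_cexp, GC_mult; [|apply GC_const]. apply GC_RtoC. apply cont_derive; intros; auto_derive; auto. }
  rewrite (cint_ext r _ (fun t => Cmult (cexp (Cmult (RtoC (- t)) s)) (V t))); [|intros t _|lra].
  2:{ rewrite dot_vscal, !dot_vadd, !dot_vscal. reflexivity. }
  assert (KV : cint (fun t => Cmult (Kl t) (V t)) (-r) 0 =
     Cplus (Cplus (Cmult c20 (cint (fun t => Cmult (Kl t) (dot n u (w20 t))) (-r) 0))
                  (Cmult c11 (cint (fun t => Cmult (Kl t) (dot n u (w11 t))) (-r) 0)))
           (Cmult c02 (cint (fun t => Cmult (Kl t) (dot n u (w02 t))) (-r) 0))).
  { rewrite (cint_ext r _ (fun t => Cplus (Cplus (Cmult c20 (Cmult (Kl t) (dot n u (w20 t))))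
                  (Cmult c11 (Cmult (Kl t) (dot n u (w11 t)))))
           (Cmult c02 (Cmult (Kl t) (dot n u (w02 t)))))); [|intros; unfold V, Vf; ring|lra].
    assert (G1 := GC_dot n r u w20 C1). assert (G2 := GC_dot n r u w11 C2). assert (G3 := GC_dot n r u w02 C3).
    assert (H1 : GC r (fun t => Cmult (Kl t) (dot n u (w20 t)))) by (apply GC_mult; auto).
    assert (H2 : GC r (fun t => Cmult (Kl t) (dot n u (w11 t)))) by (apply GC_mult; auto).
    assert (H3 : GC r (fun t => Cmult (Kl t) (dot n u (w02 t)))) by (apply GC_mult; auto).
    rewrite cint_plus; [|lra| |apply GC_mult; [apply GC_const|auto]].
    2:{ apply GC_plus; apply GC_mult; try apply GC_const; auto. }
    rewrite cint_plus; [|lra|apply GC_mult; [apply GC_const|auto]|apply GC_mult; [apply GC_const|auto]].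
    rewrite !cint_scal by (auto; lra). reflexivity. }
  rewrite KV. unfold Kl, u, phic, c20, c11, c02, g. ring.
Qed.

Definition H2ex n r mu om (P phi : cvec) (B : rmat) (g21 g12 c20 c11 c02 : C) (w20 w11 w02 : R -> cvec) : C :=
  let lam := (mu, om) : C in
  let u := vm n P (rtoc_mat B) in
  let a := cexp (Cmult (RtoC (- r)) lam) in
  let ac := cexp (Cmult (RtoC (- r)) (Cconj lam)) in
  let phic := fun i => Cconj (phi i) in
  Cplus (Cminus (Cmult (Cmult (Cmult g21 (dot n u phi)) a) (RtoC (2 * r ^ 2 * rho2 (2 * mu * r))))
                (Cmult (Cmult (Cconj g12) (dot n u phic))
                       (Cplus (Cdiv (Cminus a ac) (Cmult lam (Cminus lam (Cconj lam))))
                              (Cdiv (Cmult a (RtoC (qf mu r))) (Cmult (RtoC 2) lam)))))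
        (cint (fun t => Cmult (Cmult (cexp (Cmult (RtoC (-(t + r))) lam)) (RtoC (qf mu (t + r))))
                              (Vf n u c20 c11 c02 w20 w11 w02 t)) (-r) 0).

Lemma rho2_eq r m : r <> 0 -> m <> 0 -> 2 * r ^ 2 * rho2 (2 * m * r) = (2 * r - qf m r) / (2 * m).
Proof. intros. unfold rho2, qf. field. split; auto. Qed.

Lemma H2_final n (A B : rmat) r mu om (psi phi : cvec) (f20 f11 f02 f21 f12 : cvec) (w20 w11 w02 : R -> cvec) :
  0 < r -> 0 < mu -> om <> 0 ->
  cont_on n r w20 -> cont_on n r w11 -> cont_on n r w02 ->
  Cplus (dot n psi phi)
       (Cmult (Cmult (dot n psi (mv n (rtoc_mat B) phi))
                     (cexp (Cmult (RtoC (- r)) (mu, om)))) (RtoC r)) <> RtoC 0 ->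
  (forall j, (j < n)%nat -> vm n psi (charmat A B r (mu, om)) j = RtoC 0) ->
  (forall i, (i < n)%nat -> mv n (charmat A B r (mu, om)) phi i = RtoC 0) ->
  let lam := (mu, om) : C in
  let P := Psi0 n B r lam psi phi in
  bilin n B r (Psifun lam P) w20 = RtoC 0 ->
  bilin n B r (Psifun lam P) w11 = RtoC 0 ->
  bilin n B r (Psifun lam P) w02 = RtoC 0 ->
  let g := fun f => dot n P f in
  dot n P (vsub (mv n (rtoc_mat B) (R1vec r lam phi (g f20) (g f11) (g f02) (g f21) (g f12) w20 w11 w02))
                (R2vec phi (g f20) (g f11) (g f02) (g f21) (g f12) f21 w20 w11 w02))
  = Cmult (RtoC mu) (H2ex n r mu om P phi B (g f21) (g f12)
        (Cmult (RtoC 2) (g f11)) (Cplus (g f20) (Cmult (RtoC 2) (Cconj (g f11)))) (Cconj (g f02)) w20 w11 w02).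
Proof.
  intros Hr Hmu Hom C1 C2 C3 Hden Hpsi Hphi lam P B1 B2 B3 g.
  unfold g, P, lam. rewrite (H2_expand n B r mu om psi phi f20 f11 f02 f21 f12 w20 w11 w02 Hr C1 C2 C3 B1 B2 B3). cbv zeta. fold lam. fold P. fold g. unfold H2ex. cbv zeta. fold lam.
  set (u := vm n P (rtoc_mat B)). set (phic := fun i => Cconj (phi i)).
  set (c20 := Cmult (RtoC 2) (g f11)). set (c11 := Cplus (g f20) (Cmult (RtoC 2) (Cconj (g f11)))).
  set (c02 := Cconj (g f02)). set (V := Vf n u c20 c11 c02 w20 w11 w02).
  set (s := Cplus (Cmult (RtoC 2) lam) (Cconj lam)).
  assert (GV : GC r V) by (apply GC_V; auto).
  assert (IQ : Cmult (RtoC mu) (cint (fun t => Cmult (Cmult (cexp (Cmult (RtoC (-(t + r))) lam)) (RtoC (qf mu (t + r)))) (V t)) (-r) 0)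
     = Cminus (cint (fun t => Cmult (cexp (Cmult (RtoC (-(t + r))) lam)) (V t)) (-r) 0)
              (Cmult (cexp (Cmult (RtoC (- r)) s)) (cint (fun t => Cmult (cexp (Cmult (RtoC (- t)) s)) (V t)) (-r) 0))).
  { assert (GK : forall z, GC r (fun t => cexp (Cmult (RtoC (-(t + r))) z))) by (intros; apply GC_kexp).
    assert (GK2 : GC r (fun t => cexp (Cmult (RtoC (- t)) s))).
    { apply GC_cexp, GC_mult; [|apply GC_const]. apply GC_RtoC. apply cont_derive; intros; auto_derive; auto. }
    rewrite <- cint_scal by (try lra; apply GC_mult; auto; apply GC_mult; auto; apply GC_kq; lra).
    rewrite <- cint_scal by (try lra; apply GC_mult; auto).
    rewrite <- cint_minus by (try lra; apply GC_mult; auto; try apply GC_const; apply GC_mult; auto).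
    apply cint_ext; [|lra]. intros t _. rewrite (Cmult_assoc (cexp (Cmult (RtoC (- r)) s))).
    replace (Cmult (cexp (Cmult (RtoC (- r)) s)) (cexp (Cmult (RtoC (- t)) s)))
      with (Cmult (cexp (Cmult (RtoC (- (t + r))) lam)) (RtoC (exp (- (2 * mu * (t + r)))))).
    - rewrite qf_exp by lra. ring.
    - rewrite <- cexp_add, <- cexp_shift. f_equal. unfold s, lam. apply injective_projections; simpl; ring. }
  assert (HF2 := F2_id n B r lam psi phi Hden). cbv zeta in HF2. fold P in HF2.
  assert (HPr : forall j, (j < n)%nat -> vm n P (charmat A B r lam) j = RtoC 0).
  { intros j Hj. unfold P, Psi0. rewrite vm_vscal, Hpsi by auto. ring. }
  assert (HF3 := F3_id n A B r lam P phi HPr Hphi). cbv zeta in HF3. fold phic in HF3.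
  rewrite !dot_mv in HF2, HF3. fold u in HF2, HF3.
  assert (Hs : s = Cplus lam (Cmult (RtoC 2) (RtoC mu))) by (unfold s, lam; apply s_eq). rewrite Hs in *.
  rewrite cexp_shift. rewrite qf_exp by lra. rewrite rho2_eq by lra.
  set (a := cexp (Cmult (RtoC (- r)) lam)) in *. set (ac := cexp (Cmult (RtoC (- r)) (Cconj lam))) in *.
  unfold V, c20, c11, c02, g in IQ. cbv beta in IQ.
  rewrite cexp_shift, qf_exp in IQ by lra. fold a in IQ.
  set (J1 := cint _ (-r) 0). set (J2 := cint _ (-r) 0). set (J3 := cint _ (-r) 0).
  fold J1 J2 J3 in IQ.
  assert (HJ2 : J2 = Cplus (Cmult (RtoC mu) J3) (Cmult (Cmult a (Cminus (RtoC 1) (Cmult (RtoC mu) (RtoC (qf mu r))))) J1)).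
  { rewrite IQ. ring. }
  rewrite HJ2. clear HJ2 IQ.
  set (p1 := dot n P phi) in *. set (p2 := dot n P phic) in *. set (b1 := dot n u phi) in *. set (b2 := dot n u phic) in *.
  set (Q := qf mu r) in *.
  assert (Hp1 : p1 = Cminus (RtoC 1) (Cmult (Cmult b1 a) (RtoC r))) by (rewrite <- HF2; ring).
  assert (Hlc : Cconj lam = Cminus (Cmult (RtoC 2) (RtoC mu)) lam) by (unfold lam; apply injective_projections; simpl; ring).
  assert (Hl : lam <> RtoC 0) by (unfold lam; intro H; injection H; lra).
  assert (Hm : RtoC mu <> RtoC 0) by (intro H; injection H; lra).
  assert (H2 : RtoC 2 <> RtoC 0) by (intro H; injection H; lra).
  assert (Hd : Cminus lam (Cconj lam) <> RtoC 0) by (unfold lam; intro H; injection H; lra).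
  assert (Hp2 : p2 = Cdiv (Cmult b2 (Cminus a ac)) (Cminus lam (Cconj lam))).
  { rewrite <- HF3. field. auto. }
  rewrite Hp1, Hp2.
  replace (RtoC ((2 * r - Q) / (2 * mu))) with (Cdiv (Cminus (Cmult (RtoC 2) (RtoC r)) (RtoC Q)) (Cmult (RtoC 2) (RtoC mu)))
    by (apply injective_projections; simpl; field; lra).
  rewrite Hlc in *. field. cbv beta. split; [auto|]. split; [auto|]. split; [auto|].
  replace (Cplus lam (Cminus (Cmult (RtoC 2) (RtoC mu)) lam)) with (RtoC (2 * mu)) by (apply injective_projections; simpl; ring).
  intro H. injection H. lra.
Qed.

Theorem proposition4p2
  (n : nat) (r om : R) (A B : rmat)
  (* unperturbed linearisation *)
  (Hr : 0 < r) (Hom : 0 < om)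
  (Hroot : simple_root n A B r (0, om))
  (Hrootc : simple_root n A B r (0, - om))
  (Hothers : forall z : C, chardet n A B r z = RtoC 0 ->
               z <> (0, om) -> z <> (0, - om) -> Re z < 0)
  (* perturbation *)
  (Ae Be : R -> rmat)
  (Hsmooth : forall i j k e, 0 < e ->
               ex_derive_n (fun x => Ae x i j) k e /\ ex_derive_n (fun x => Be x i j) k e)
  (HAcv : forall i j, cv0 (fun e => Ae e i j) (A i j))
  (HBcv : forall i j, cv0 (fun e => Be e i j) (B i j))
  (mu ome : R -> R) (eps0 : R) (Heps0 : 0 < eps0)
  (Hpert : forall e, 0 < e < eps0 ->
     0 < mu e /\
     simple_root n (Ae e) (Be e) r (mu e, ome e) /\
     simple_root n (Ae e) (Be e) r (mu e, - ome e) /\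
     (forall z : C, chardet n (Ae e) (Be e) r z = RtoC 0 ->
        z <> (mu e, ome e) -> z <> (mu e, - ome e) -> Re z < 0))
  (Hmucv : cv0 mu 0) (Homcv : cv0 ome om)
  (* eigenvectors phi_{eps1}(0), psi_{eps1}(0) and their unperturbed limits *)
  (phi psi : R -> cvec) (phiu psiu : cvec)
  (Hphi : forall e, 0 < e < eps0 -> nonzero_vec n (phi e) /\
     forall i, (i < n)%nat ->
       mv n (charmat (Ae e) (Be e) r (mu e, ome e)) (phi e) i = RtoC 0)
  (Hpsi : forall e, 0 < e < eps0 -> nonzero_vec n (psi e) /\
     forall j, (j < n)%nat ->
       vm n (psi e) (charmat (Ae e) (Be e) r (mu e, ome e)) j = RtoC 0)
  (Hphiu : nonzero_vec n phiu /\
     forall i, (i < n)%nat -> mv n (charmat A B r (0, om)) phiu i = RtoC 0)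
  (Hpsiu : nonzero_vec n psiu /\
     forall j, (j < n)%nat -> vm n psiu (charmat A B r (0, om)) j = RtoC 0)
  (Hphicv : forall i, (i < n)%nat -> cv0 (fun e => phi e i) (phiu i))
  (Hpsicv : forall i, (i < n)%nat -> cv0 (fun e => psi e i) (psiu i))
  (* Psi_{eps1}(0) and Psi_1(0) are well defined *)
  (Hden : forall e, 0 < e < eps0 ->
     Cplus (dot n (psi e) (phi e))
       (Cmult (Cmult (dot n (psi e) (mv n (rtoc_mat (Be e)) (phi e)))
                     (cexp (Cmult (RtoC (- r)) (mu e, ome e)))) (RtoC r)) <> RtoC 0)
  (Hdenu : Cplus (dot n psiu phiu)
       (Cmult (Cmult (dot n psiu (mv n (rtoc_mat B) phiu))
                     (cexp (Cmult (RtoC (- r)) (0, om)))) (RtoC r)) <> RtoC 0)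
  (* coefficients w_{eps j,k} of the unstable manifold and their limits *)
  (w20 w11 w02 : R -> R -> cvec) (w20u w11u w02u : R -> cvec)
  (Hwcont : forall e, 0 < e < eps0 ->
     cont_on n r (w20 e) /\ cont_on n r (w11 e) /\ cont_on n r (w02 e))
  (Hwucont : cont_on n r w20u /\ cont_on n r w11u /\ cont_on n r w02u)
  (Hworth : forall e, 0 < e < eps0 ->
     let P := Psifun (mu e, ome e)
                (Psi0 n (Be e) r (mu e, ome e) (psi e) (phi e)) in
     bilin n (Be e) r P (w20 e) = RtoC 0 /\
     bilin n (Be e) r P (w11 e) = RtoC 0 /\
     bilin n (Be e) r P (w02 e) = RtoC 0)
  (Hwcv : unif_cv n r w20 w20u /\ unif_cv n r w11 w11u /\ unif_cv n r w02 w02u)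
  (* Taylor coefficients f_{eps j,k} and their limits *)
  (f20 f11 f02 f21 f12 : R -> cvec) (f20u f11u f02u f21u f12u : cvec)
  (Hfcv : forall i, (i < n)%nat ->
     cv0 (fun e => f20 e i) (f20u i) /\ cv0 (fun e => f11 e i) (f11u i) /\
     cv0 (fun e => f02 e i) (f02u i) /\ cv0 (fun e => f21 e i) (f21u i) /\
     cv0 (fun e => f12 e i) (f12u i)) :
  let lam := fun e => (mu e, ome e) : C in
  let P0 := fun e => Psi0 n (Be e) r (lam e) (psi e) (phi e) in
  let g := fun (f : R -> cvec) e => dot n (P0 e) (f e) in
  let R1 := fun e => R1vec r (lam e) (phi e) (g f20 e) (g f11 e) (g f02 e)
                        (g f21 e) (g f12 e) (w20 e) (w11 e) (w02 e) in
  let R2 := fun e => R2vec (phi e) (g f20 e) (g f11 e) (g f02 e)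
                        (g f21 e) (g f12 e) (f21 e) (w20 e) (w11 e) (w02 e) in
  exists (h1 : R -> cvec) (h2 : R -> C) (eps1 : R),
    0 < eps1 /\
    (forall e, 0 < e < eps1 ->
       (forall j, (j < n)%nat ->
          vm n (P0 e) (Mmat (Ae e) (Be e) r (lam e)) j = Cmult (RtoC (mu e)) (h1 e j)) /\
       dot n (P0 e) (vsub (mv n (rtoc_mat (Be e)) (R1 e)) (R2 e))
         = Cmult (RtoC (mu e)) (h2 e)) /\
    (forall j, (j < n)%nat -> exists L : C, cv0 (fun e => h1 e j) L) /\
    (exists L : C, cv0 h2 L).
Proof.
  intros lam P0 g R1 R2.
  assert (Hpos : forall e, 0 < e < eps0 -> 0 < mu e) by (intros e He; apply Hpert; auto).
  assert (Cmu : cvR mu 0) by exact Hmucv.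
  assert (Com : cvR ome om) by exact Homcv.
  destruct (cvR_get ome om Com (om / 2) ltac:(lra)) as [d1 [Hd1 Hd1']].
  set (eps1 := Rmin eps0 d1).
  assert (He1 : forall e, 0 < e < eps1 -> 0 < e < eps0 /\ om / 2 < ome e).
  { intros e He. assert (e < eps0) by (eapply Rlt_le_trans; [apply He|apply Rmin_l]).
    assert (e < d1) by (eapply Rlt_le_trans; [apply He|apply Rmin_r]).
    specialize (Hd1' e ltac:(lra)). apply Rabs_lt_between in Hd1'. lra. }
  assert (Clam : cv0 lam (0, om)).
  { apply cvC_split. split; simpl; auto. }
  assert (CB : forall i j, cv0 (fun e => rtoc_mat (Be e) i j) (rtoc_mat B i j)).
  { intros. apply cvC_RtoC. apply HBcv. }
  assert (Ca : forall z0 (z : R -> C), cv0 z z0 -> cv0 (fun e => cexp (Cmult (RtoC (- r)) (z e))) (cexp (Cmult (RtoC (- r)) z0))).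
  { intros. apply cvC_cexp. apply cvC_mult; auto. apply cvC_const. }
  set (denu := Cplus (dot n psiu phiu) (Cmult (Cmult (dot n psiu (mv n (rtoc_mat B) phiu))
                     (cexp (Cmult (RtoC (- r)) (0, om)))) (RtoC r))).
  set (P0u := vscal (Cinv denu) psiu).
  assert (Cden : cv0 (fun e => Cplus (dot n (psi e) (phi e))
       (Cmult (Cmult (dot n (psi e) (mv n (rtoc_mat (Be e)) (phi e)))
                     (cexp (Cmult (RtoC (- r)) (mu e, ome e)))) (RtoC r))) denu).
  { apply cvC_plus. unfold dot. apply cv_csum; intros; apply cvC_mult; auto.
    apply cvC_mult; [|apply cvC_const]. apply cvC_mult; [|apply (Ca (0, om) lam Clam)].
    unfold dot. apply cv_csum; intros i Hi. apply cvC_mult; auto.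
    unfold mv. apply cv_csum; intros j Hj. apply cvC_mult; auto. }
  assert (CP0 : forall i, (i < n)%nat -> cv0 (fun e => P0 e i) (P0u i)).
  { intros i Hi. unfold P0, Psi0, P0u, vscal. apply cvC_mult; auto. apply cvC_inv; auto. }
  assert (Cu : forall j, (j < n)%nat -> cv0 (fun e => vm n (P0 e) (rtoc_mat (Be e)) j) (vm n P0u (rtoc_mat B) j)).
  { intros j Hj. unfold vm. apply cv_csum; intros i Hi. apply cvC_mult; auto. }
  assert (Cq : cvR (fun e => qf (mu e) r) (2 * r)) by (apply (cv_q r mu eps0); auto).
  assert (HP0 : forall e, 0 < e < eps0 -> forall j, (j < n)%nat -> vm n (P0 e) (charmat (Ae e) (Be e) r (lam e)) j = RtoC 0).
  { intros e He j Hj. unfold P0, Psi0. rewrite vm_vscal. destruct (Hpsi e He) as [_ Hp]. rewrite Hp by auto. ring. }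
  exists (fun e j => Cdiv (vm n (P0 e) (Mmat (Ae e) (Be e) r (lam e)) j) (RtoC (mu e))).
  exists (fun e => Cdiv (dot n (P0 e) (vsub (mv n (rtoc_mat (Be e)) (R1 e)) (R2 e))) (RtoC (mu e))).
  exists eps1. split; [apply Rmin_pos; lra|]. split; [|split].
  - intros e He. destruct (He1 e He) as [He0 _].
    assert (Hm : RtoC (mu e) <> RtoC 0) by (specialize (Hpos e He0); intro H; injection H; lra).
    split. intros; field; auto. field; auto.
  - intros j Hj. eexists.
    apply (cvC_ext (fun e => Cplus (Cmult (RtoC 2) (P0 e j)) (Cmult (vm n (P0 e) (rtoc_mat (Be e)) j) (Cmult (cexp (Cmult (RtoC (- r)) (lam e))) (RtoC (qf (mu e) r)))))).
    { exists eps0; split; auto. intros e He. symmetry. unfold lam.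
      rewrite (h1_id n (Ae e) (Be e) r (mu e) (ome e) (P0 e) j Hj) by (try (specialize (Hpos e He); lra); apply HP0; auto).
      field. specialize (Hpos e He). intro H; injection H; lra. }
    apply cvC_plus. apply cvC_mult. apply cvC_const. auto.
    apply cvC_mult. auto. apply cvC_mult. apply (Ca (0, om) lam Clam). apply cvC_RtoC. exact Cq.
  - assert (Cg : forall (f : R -> cvec) (fu : cvec), (forall i, (i < n)%nat -> cv0 (fun e => f e i) (fu i)) ->
                 cv0 (fun e => g f e) (dot n P0u fu)).
    { intros f fu Hf. unfold g, dot. apply cv_csum; intros; apply cvC_mult; auto. }
    eexists.
    apply (cvC_ext (fun e => H2ex n r (mu e) (ome e) (P0 e) (phi e) (Be e) (g f21 e) (g f12 e)
        (Cmult (RtoC 2) (g f11 e)) (Cplus (g f20 e) (Cmult (RtoC 2) (Cconj (g f11 e)))) (Cconj (g f02 e))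
        (w20 e) (w11 e) (w02 e))).
    { exists eps1; split; [apply Rmin_pos; lra|]. intros e He. destruct (He1 e He) as [He0 Hom'].
      destruct (Hwcont e He0) as [C1 [C2 C3]].
      destruct (Hworth e He0) as [B1 [B2 B3]].
      assert (HH := H2_final n (Ae e) (Be e) r (mu e) (ome e) (psi e) (phi e) (f20 e) (f11 e) (f02 e) (f21 e) (f12 e)
        (w20 e) (w11 e) (w02 e) Hr (Hpos e He0) ltac:(lra) C1 C2 C3 (Hden e He0) (proj2 (Hpsi e He0)) (proj2 (Hphi e He0)) B1 B2 B3).
      cbv beta zeta in HH. unfold R1, R2, g, P0, lam. cbv beta. rewrite HH.
      field. specialize (Hpos e He0). intro H; injection H; lra. }
    assert (Cf : forall i, (i < n)%nat ->
      cv0 (fun e => f20 e i) (f20u i) /\ cv0 (fun e => f11 e i) (f11u i) /\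
      cv0 (fun e => f02 e i) (f02u i) /\ cv0 (fun e => f21 e i) (f21u i) /\ cv0 (fun e => f12 e i) (f12u i)) by exact Hfcv.
    assert (G20 := Cg f20 f20u ltac:(intros i Hi; apply Cf; auto)).
    assert (G11 := Cg f11 f11u ltac:(intros i Hi; apply Cf; auto)).
    assert (G02 := Cg f02 f02u ltac:(intros i Hi; apply Cf; auto)).
    assert (G21 := Cg f21 f21u ltac:(intros i Hi; apply Cf; auto)).
    assert (G12 := Cg f12 f12u ltac:(intros i Hi; apply Cf; auto)).
    assert (Cphic : forall i, (i < n)%nat -> cv0 (fun e => Cconj (phi e i)) (Cconj (phiu i))).
    { intros; apply cvC_conj; auto. }
    unfold H2ex. cbv zeta.
    apply cvC_plus; [apply cvC_minus|].
    + apply cvC_mult. apply cvC_mult. apply cvC_mult. exact G21.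
      unfold dot; apply cv_csum; intros; apply cvC_mult; auto.
      apply (Ca (0, om) lam Clam).
      apply cvC_RtoC. apply cvR_mult. apply cvR_const. apply (cv_rho2 r mu eps0); auto.
    + apply cvC_mult. apply cvC_mult. apply cvC_conj; exact G12.
      unfold dot; apply cv_csum; intros; apply cvC_mult; auto.
      apply cvC_plus.
      * apply cvC_div.
        2:{ apply cvC_minus. apply (Ca (0, om) lam Clam). apply (Ca (Cconj (0, om)) (fun e => Cconj (lam e))). apply cvC_conj; auto. }
        2:{ apply cvC_mult; [exact Clam|]. apply cvC_minus; [exact Clam|]. apply cvC_conj; exact Clam. }
        { intro H. apply (f_equal fst) in H. simpl in H. nra. }
      * apply cvC_div.
        2:{ apply cvC_mult. apply (Ca (0, om) lam Clam). apply cvC_RtoC. exact Cq. }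
        2:{ apply cvC_mult; [apply cvC_const|exact Clam]. }
        { intro H. apply (f_equal snd) in H. simpl in H. nra. }
    + assert (UCw : forall (w : R -> R -> cvec) w0, unif_cv n r w w0 -> cont_on n r w0 ->
          UC r (fun e t => dot n (vm n (P0 e) (rtoc_mat (Be e))) (w e t)) (fun t => dot n (vm n P0u (rtoc_mat B)) (w0 t))).
      { intros w w0 Hw Hw0. unfold dot. apply UC_csum. intros i Hi. apply UC_mult; [lra|apply GC_const|apply cont_GC with n; auto| |].
        apply UC_const. apply Cu; auto.
        intros eta Heta. destruct (Hw eta Heta) as [dd [Hdd Hw']]. exists dd; split; auto. }
      destruct Hwcv as [W20 [W11 W02]]. destruct Hwucont as [U20 [U11 U02]].
      apply (UC_cint r _ (fun t => Cmult (Cmult (cexp (Cmult (RtoC (-(t + r))) (0, om))) (RtoC (2 * (t + r))))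
          (Vf n (vm n P0u (rtoc_mat B)) (Cmult (RtoC 2) (dot n P0u f11u))
              (Cplus (dot n P0u f20u) (Cmult (RtoC 2) (Cconj (dot n P0u f11u)))) (Cconj (dot n P0u f02u)) w20u w11u w02u t))).
      * exact Hr.
      * apply UC_mult; [lra| | | |].
        -- apply GC_mult. apply GC_kexp. apply GC_lin.
        -- apply GC_V; auto.
        -- apply UC_mult; [lra|apply GC_kexp|apply GC_lin| |].
           ++ apply (UC_cexp_lin r lam (0, om)); auto; lra.
           ++ apply (UC_q r mu eps0); auto; lra.
        -- unfold Vf. apply UC_plus; [apply UC_plus|].
           ++ apply UC_mult; [lra|apply GC_const|apply GC_dot; auto|apply UC_const; apply cvC_mult; [apply cvC_const|exact G11]|apply UCw; auto].
           ++ apply UC_mult; [lra|apply GC_const|apply GC_dot; auto| |apply UCw; auto].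
              apply UC_const. apply cvC_plus. exact G20. apply cvC_mult. apply cvC_const. apply cvC_conj. exact G11.
           ++ apply UC_mult; [lra|apply GC_const|apply GC_dot; auto|apply UC_const; apply cvC_conj; exact G02|apply UCw; auto].
      * exists eps0; split; auto. intros e He. destruct (Hwcont e He) as [C1 [C2 C3]].
        apply GC_mult. apply GC_mult. apply GC_kexp. apply GC_kq. specialize (Hpos e He); lra.
        apply GC_V; auto.
      * apply GC_mult. apply GC_mult. apply GC_kexp. apply GC_lin. apply GC_V; auto.
Qed.
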